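(* Let $N\ge3$ and $p>p_S$. There exists $\underline\lambda>0$ such that for $0<\lambda<\underline\lambda$ problem (N) has no nonconstant regular solution. Moreover, there exists $\bar\lambda>0$ such that for $\lambda>\bar\lambda$ problem (N) has no radially decreasing regular solution.
   Context: $f(U):=-U+U^p$, $p_S:=\frac{N+2}{N-2}$. Problem (N): $U''+\frac{N-1}{r}U'+\lambda f(U)=0$ on $0<r<1$, $U'(1)=0$, $U>0$ on $[0,1]$, $\lambda>0$; a regular solution is $C^2$ on $[0,1]$ with $U'(0)=0$. *)

(* Defs.v *)
From Stdlib Require Import Reals Lra.
Open Scope R_scope.

Definition f (p U : R) : R := - U + Rpower U p.

Definition p_S (N : nat) : R := (INR N + 2) / (INR N - 2).

(* U is C^2 on [0,1]: first and second derivatives exist at every point of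
   [0,1] and the second derivative is continuous there.  (U is a function on
   R; any C^2 function on [0,1] extends to a C^2 function on R, so this is
   the usual notion.) *)
Definition C2_on_01 (U U1 U2 : R -> R) : Prop :=
  forall x, 0 <= x <= 1 ->
    derivable_pt_lim U x (U1 x) /\
    derivable_pt_lim U1 x (U2 x) /\
    continuity_pt U2 x.

Definition regular_solution (N : nat) (p lam : R) (U : R -> R) : Prop :=
  exists U1 U2 : R -> R,
    C2_on_01 U U1 U2 /\
    (forall r, 0 < r < 1 ->
        U2 r + (INR N - 1) / r * U1 r + lam * f p (U r) = 0) /\
    U1 1 = 0 /\ U1 0 = 0 /\
    (forall x, 0 <= x <= 1 -> 0 < U x).

Definition nonconstant_01 (U : R -> R) : Prop :=
  exists x y, 0 <= x <= 1 /\ 0 <= y <= 1 /\ U x <> U y.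

Definition radially_decreasing (U : R -> R) : Prop :=
  (forall x y, 0 <= x -> x <= y -> y <= 1 -> U y <= U x) /\ nonconstant_01 U.

(* Main.v *)
Require Import Defs.
From Stdlib Require Import Reals Lra Lia Psatz.
Open Scope R_scope.

Lemma dpl_eq f x a b : derivable_pt_lim f x a -> a = b -> derivable_pt_lim f x b.
Proof. intros H ->; exact H. Qed.

Lemma dpl_const (c x : R) : derivable_pt_lim (fun _ => c) x 0.
Proof. apply derivable_pt_lim_const. Qed.

Lemma dpl_id x : derivable_pt_lim (fun y => y) x 1.
Proof. apply derivable_pt_lim_id. Qed.

Lemma dpl_plus f g x a b : derivable_pt_lim f x a -> derivable_pt_lim g x b ->
  derivable_pt_lim (fun y => f y + g y) x (a + b).
Proof. intros; apply (derivable_pt_lim_plus f g); auto. Qed.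

Lemma dpl_minus f g x a b : derivable_pt_lim f x a -> derivable_pt_lim g x b ->
  derivable_pt_lim (fun y => f y - g y) x (a - b).
Proof. intros; apply (derivable_pt_lim_minus f g); auto. Qed.

Lemma dpl_mult f g x a b : derivable_pt_lim f x a -> derivable_pt_lim g x b ->
  derivable_pt_lim (fun y => f y * g y) x (a * g x + f x * b).
Proof. intros; apply (derivable_pt_lim_mult f g); auto. Qed.

Lemma dpl_opp f x a : derivable_pt_lim f x a -> derivable_pt_lim (fun y => - f y) x (- a).
Proof. intros; apply (derivable_pt_lim_opp f); auto. Qed.

Lemma dpl_pow f x a n : derivable_pt_lim f x a ->
  derivable_pt_lim (fun y => (f y) ^ n) x (INR n * (f x) ^ (pred n) * a).
Proof.
  intros H. apply (derivable_pt_lim_comp f (fun y => y ^ n)); auto.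
  apply derivable_pt_lim_pow.
Qed.

Lemma dpl_rp f x a q : derivable_pt_lim f x a -> 0 < f x ->
  derivable_pt_lim (fun y => Rpower (f y) q) x (q * Rpower (f x) (q - 1) * a).
Proof.
  intros H Hp. apply (derivable_pt_lim_comp f (fun y => Rpower y q)); auto.
  apply derivable_pt_lim_power; auto.
Qed.

Lemma dpl_sin f x a : derivable_pt_lim f x a ->
  derivable_pt_lim (fun y => sin (f y)) x (cos (f x) * a).
Proof. intros H. apply (derivable_pt_lim_comp f sin); auto. apply derivable_pt_lim_sin. Qed.

Lemma dpl_cos f x a : derivable_pt_lim f x a ->
  derivable_pt_lim (fun y => cos (f y)) x (- sin (f x) * a).
Proof. intros H. apply (derivable_pt_lim_comp f cos); auto. apply derivable_pt_lim_cos. Qed.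

Ltac dstep := first [ apply dpl_const | apply dpl_id | eassumption
  | apply dpl_plus | apply dpl_minus | apply dpl_mult | apply dpl_opp
  | apply dpl_pow | apply dpl_sin | apply dpl_cos | apply dpl_rp ].
Ltac dsolve := repeat dstep.

Lemma mono_dec (G G' : R -> R) a b : a <= b ->
  (forall c, a <= c <= b -> derivable_pt_lim G c (G' c)) ->
  (forall c, a < c < b -> G' c <= 0) -> G b <= G a.
Proof.
  intros Hab HD Hs. destruct (Rle_lt_or_eq_dec a b Hab) as [Hlt|Heq].
  - destruct (MVT_cor2 G G' a b Hlt HD) as [c [Hc1 Hc2]].
    assert (G' c <= 0) by (apply Hs; lra). nra.
  - subst; lra.
Qed.

Lemma mono_inc (G G' : R -> R) a b : a <= b ->
  (forall c, a <= c <= b -> derivable_pt_lim G c (G' c)) ->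
  (forall c, a < c < b -> 0 <= G' c) -> G a <= G b.
Proof.
  intros Hab HD Hs. destruct (Rle_lt_or_eq_dec a b Hab) as [Hlt|Heq].
  - destruct (MVT_cor2 G G' a b Hlt HD) as [c [Hc1 Hc2]].
    assert (0 <= G' c) by (apply Hs; lra). nra.
  - subst; lra.
Qed.

Lemma mono_dec_strict (G G' : R -> R) a b : a < b ->
  (forall c, a <= c <= b -> derivable_pt_lim G c (G' c)) ->
  (forall c, a < c < b -> G' c < 0) -> G b < G a.
Proof.
  intros Hlt HD Hs.
  destruct (MVT_cor2 G G' a b Hlt HD) as [c [Hc1 Hc2]].
  assert (G' c < 0) by (apply Hs; lra). nra.
Qed.

Lemma exp_le_mono x y : x <= y -> exp x <= exp y.
Proof. intros [H|H]. left; apply exp_increasing; auto. subst; lra. Qed.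

Lemma rp_pos x q : 0 < Rpower x q.
Proof. unfold Rpower; apply exp_pos. Qed.

Lemma rp_le1 x q : 0 < x <= 1 -> 0 <= q -> Rpower x q <= 1.
Proof.
  intros [H1 H2] Hq. unfold Rpower. rewrite <- exp_0. apply exp_le_mono.
  assert (ln x <= 0). { rewrite <- ln_1. destruct H2 as [H2|H2]. left; apply ln_increasing; lra. subst; lra. }
  nra.
Qed.

Lemma rp_ge1 x q : 1 <= x -> 0 <= q -> 1 <= Rpower x q.
Proof.
  intros H Hq. rewrite <- (Rpower_O x) by lra. apply Rle_Rpower; lra.
Qed.

Lemma rp_ge1' x q : 0 < x <= 1 -> q <= 0 -> 1 <= Rpower x q.
Proof.
  intros [H1 H2] Hq. unfold Rpower. rewrite <- exp_0. apply exp_le_mono.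
  assert (ln x <= 0). { rewrite <- ln_1. destruct H2 as [H2|H2]. left; apply ln_increasing; lra. subst; lra. }
  nra.
Qed.

Lemma rp_gt1 x q : 1 < x -> 0 < q -> 1 < Rpower x q.
Proof.
  intros H Hq. rewrite <- (Rpower_O x) by lra. apply Rpower_lt; lra.
Qed.

Lemma rp_mono x y q : 0 <= q -> 0 < x <= y -> Rpower x q <= Rpower y q.
Proof. intros; apply Rle_Rpower_l; auto. Qed.

Lemma rp_inv_mono x y q : 0 < q -> 0 < x -> 0 < y -> Rpower x q <= Rpower y q -> x <= y.
Proof.
  intros Hq Hx Hy H. destruct (Rle_or_lt x y) as [|Hlt]; auto.
  assert (Rpower y q < Rpower x q) by (apply Rlt_Rpower_l; lra). lra.
Qed.

Lemma rp_inv_lt x y q : 0 < q -> 0 < x -> 0 < y -> Rpower x q < Rpower y q -> x < y.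
Proof.
  intros Hq Hx Hy H. destruct (Rlt_or_le x y) as [|Hle]; auto.
  assert (Rpower y q <= Rpower x q) by (apply Rle_Rpower_l; lra). lra.
Qed.

Lemma rp_add1 x q : 0 < x -> Rpower x (q + 1) = Rpower x q * x.
Proof. intros. rewrite Rpower_plus, Rpower_1; auto. Qed.

Lemma rp_sub1 x q : 0 < x -> Rpower x q = Rpower x (q - 1) * x.
Proof. intros. rewrite <- rp_add1 by auto. f_equal; ring. Qed.

Lemma rp_mvt x y q : 0 < x -> 0 < y -> exists z, Rmin x y <= z <= Rmax x y /\
  Rpower y q - Rpower x q = q * Rpower z (q - 1) * (y - x).
Proof.
  intros Hx Hy. destruct (Rtotal_order x y) as [Hlt|[Heq|Hgt]].
  - destruct (MVT_cor2 (fun t => Rpower t q) (fun t => q * Rpower t (q-1)) x y Hlt) as [c [Hc1 Hc2]].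
    + intros c Hc. apply derivable_pt_lim_power. lra.
    + exists c. rewrite Rmin_left, Rmax_right by lra. split; [lra|]. rewrite Hc1. ring.
  - subst. exists y. rewrite Rmin_left, Rmax_left by lra. split; [lra|ring].
  - destruct (MVT_cor2 (fun t => Rpower t q) (fun t => q * Rpower t (q-1)) y x Hgt) as [c [Hc1 Hc2]].
    + intros c Hc. apply derivable_pt_lim_power. lra.
    + exists c. rewrite Rmin_right, Rmax_left by lra. split; [lra|]. 
      replace (Rpower y q - Rpower x q) with (-(Rpower x q - Rpower y q)) by ring.
      rewrite Hc1. ring.
Qed.
Lemma Rmult_le_0_l_pos a b : 0 <= a -> b <= 0 -> a * b <= 0.
Proof. intros; nra. Qed.

Definition SOL (N : nat) (p lam : R) (U U1 U2 : R -> R) : Prop :=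
    C2_on_01 U U1 U2 /\
    (forall r, 0 < r < 1 ->
        U2 r + (INR N - 1) / r * U1 r + lam * Defs.f p (U r) = 0) /\
    U1 1 = 0 /\ U1 0 = 0 /\
    (forall x, 0 <= x <= 1 -> 0 < U x).

Lemma powS1 r n : (1 <= n)%nat -> r ^ n = r * r ^ (pred n).
Proof. intros H. destruct n; [lia|]. simpl. reflexivity. Qed.

Lemma INR_N1 N : (1 <= N)%nat -> INR (N - 1) = INR N - 1.
Proof. intros H. rewrite minus_INR by lia. simpl. ring. Qed.


Lemma Hderiv N p lam U U1 U2 : (3 <= N)%nat -> SOL N p lam U U1 U2 ->
  forall r, 0 <= r <= 1 ->
  derivable_pt_lim (fun x => x ^ (N-1) * U1 x) r
     ((INR N - 1) * r ^ (pred (N-1)) * U1 r + r ^ (N-1) * U2 r).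
Proof.
  intros HN [HC _] r Hr. destruct (HC r Hr) as [_ [HU1 _]].
  eapply dpl_eq. dsolve. rewrite INR_N1 by lia. ring.
Qed.

Lemma Hderiv_val N p lam U U1 U2 : (3 <= N)%nat -> SOL N p lam U U1 U2 ->
  forall r, 0 < r < 1 ->
  (INR N - 1) * r ^ (pred (N-1)) * U1 r + r ^ (N-1) * U2 r
   = lam * r ^ (N-1) * (U r - Rpower (U r) p).
Proof.
  intros HN [HC [Hode _]] r Hr. specialize (Hode r Hr). unfold Defs.f in Hode.
  rewrite (powS1 r (N-1)) by lia.
  assert (U2 r = - ((INR N - 1) / r * U1 r) - lam * (- U r + Rpower (U r) p)) by lra.
  rewrite H. field. lra.
Qed.

Lemma SOL_dU N p lam U U1 U2 : SOL N p lam U U1 U2 ->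
  forall r, 0 <= r <= 1 -> derivable_pt_lim U r (U1 r).
Proof. intros [HC _] r Hr. apply (HC r Hr). Qed.

Lemma SOL_dU1 N p lam U U1 U2 : SOL N p lam U U1 U2 ->
  forall r, 0 <= r <= 1 -> derivable_pt_lim U1 r (U2 r).
Proof. intros [HC _] r Hr. apply (HC r Hr). Qed.

Lemma SOL_pos N p lam U U1 U2 : SOL N p lam U U1 U2 ->
  forall r, 0 <= r <= 1 -> 0 < U r.
Proof. intros (_ & _ & _ & _ & H) r Hr. auto. Qed.

Lemma SOL_ode N p lam U U1 U2 : SOL N p lam U U1 U2 ->
  forall r, 0 < r < 1 -> U2 r = - ((INR N - 1) / r * U1 r) - lam * (- U r + Rpower (U r) p).
Proof. intros (_ & H & _) r Hr. specialize (H r Hr). unfold Defs.f in H. lra. Qed.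

Lemma U1zero_const U U1 : (forall r, 0 <= r <= 1 -> derivable_pt_lim U r (U1 r)) ->
  (forall r, 0 <= r <= 1 -> U1 r = 0) -> forall x y, 0 <= x <= 1 -> 0 <= y <= 1 -> U x = U y.
Proof.
  intros HD HZ.
  assert (K : forall x y, 0 <= x <= y -> y <= 1 -> U x = U y).
  { intros x y Hxy Hy.
    assert (U y <= U x). { apply (mono_dec U U1); try lra. intros c Hc; apply HD; lra.
      intros c Hc; rewrite HZ; lra. }
    assert (U x <= U y). { apply (mono_inc U U1); try lra. intros c Hc; apply HD; lra.
      intros c Hc; rewrite HZ; lra. }
    lra. }
  intros x y Hx Hy. destruct (Rle_or_lt x y). apply K; lra. symmetry; apply K; lra.
Qed.

Lemma const_side N p lam U U1 U2 : (3 <= N)%nat -> 1 < p -> 0 < lam -> SOL N p lam U U1 U2 ->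
  ((forall x, 0 <= x <= 1 -> 1 <= U x) \/ (forall x, 0 <= x <= 1 -> U x <= 1)) ->
  forall x y, 0 <= x <= 1 -> 0 <= y <= 1 -> U x = U y.
Proof.
  intros HN Hp Hl HS Hside.
  pose proof (Hderiv N p lam U U1 U2 HN HS) as HD.
  pose proof (Hderiv_val N p lam U U1 U2 HN HS) as HV.
  pose proof HS as (_ & _ & H1 & H0 & Hpos).
  set (G := fun x => x ^ (N-1) * U1 x).
  set (Gd := fun r => (INR N - 1) * r ^ (pred (N-1)) * U1 r + r ^ (N-1) * U2 r).
  assert (G0 : G 0 = 0) by (unfold G; rewrite H0; ring).
  assert (G1 : G 1 = 0) by (unfold G; rewrite H1; ring).
  apply (U1zero_const U U1 (SOL_dU _ _ _ _ _ _ HS)).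
  intros r Hr.
  destruct (Rle_lt_or_eq_dec 0 r (proj1 Hr)) as [Hr0|Hr0]; [|subst; auto].
  assert (Gr : G r = 0).
  { destruct Hside as [Hs|Hs].
    - assert (Hsg : forall c, 0 < c < 1 -> lam * c ^ (N-1) * (U c - Rpower (U c) p) <= 0).
      { intros c Hc. assert (0 < c ^ (N-1)) by (apply pow_lt; lra).
        assert (1 <= U c) by (apply Hs; lra). assert (0 < U c) by (apply Hpos; lra).
        rewrite (rp_sub1 (U c) p) by lra.
        assert (1 <= Rpower (U c) (p-1)) by (apply rp_ge1; lra).
        assert (0 <= lam * c ^ (N-1)) by (apply Rmult_le_pos; lra).
        assert (U c - Rpower (U c) (p-1) * U c <= 0) by nra.
        apply Rmult_le_0_l_pos; lra. }
      assert (G r <= G 0). { apply (mono_dec G Gd 0 r); try lra. intros c Hc; apply HD; lra.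
        intros c Hc. unfold Gd. rewrite HV by lra. apply Hsg; lra. }
      assert (G 1 <= G r). { apply (mono_dec G Gd r 1); try lra. intros c Hc; apply HD; lra.
        intros c Hc. unfold Gd. rewrite HV by lra. apply Hsg; lra. }
      lra.
    - assert (Hsg : forall c, 0 < c < 1 -> 0 <= lam * c ^ (N-1) * (U c - Rpower (U c) p)).
      { intros c Hc. assert (0 < c ^ (N-1)) by (apply pow_lt; lra).
        assert (U c <= 1) by (apply Hs; lra). assert (0 < U c) by (apply Hpos; lra).
        rewrite (rp_sub1 (U c) p) by lra.
        assert (Rpower (U c) (p-1) <= 1) by (apply rp_le1; lra).
        assert (0 <= lam * c ^ (N-1)) by (apply Rmult_le_pos; lra).
        assert (0 <= U c - Rpower (U c) (p-1) * U c) by nra.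
        apply Rmult_le_pos; lra. }
      assert (G 0 <= G r). { apply (mono_inc G Gd 0 r); try lra. intros c Hc; apply HD; lra.
        intros c Hc. unfold Gd. rewrite HV by lra. apply Hsg; lra. }
      assert (G r <= G 1). { apply (mono_inc G Gd r 1); try lra. intros c Hc; apply HD; lra.
        intros c Hc. unfold Gd. rewrite HV by lra. apply Hsg; lra. }
      lra. }
  unfold G in Gr. assert (0 < r ^ (N-1)) by (apply pow_lt; lra).
  apply (Rmult_eq_reg_l (r ^ (N-1))); [lra|lra].
Qed.

Definition FF p u := - u ^ 2 / 2 + Rpower u (p + 1) / (p + 1).

Lemma rp_p1 u p : 0 < u -> Rpower u (p + 1) = Rpower u (p - 1) * u ^ 2.
Proof. intros Hu. replace (p + 1) with ((p - 1) + 1 + 1) by ring.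
  rewrite !rp_add1 by auto. ring. Qed.

Lemma energy_le N p lam U U1 U2 : (3 <= N)%nat -> 1 < p -> 0 < lam -> SOL N p lam U U1 U2 ->
  forall r, 0 <= r <= 1 -> FF p (U r) <= FF p (U 0).
Proof.
  intros HN Hp Hl HS r Hr.
  pose proof HS as (HC & _ & H1 & H0 & Hpos).
  set (E := fun x => (U1 x) ^ 2 / 2 + lam * (- (U x) ^ 2 / 2 + Rpower (U x) (p + 1) / (p + 1))).
  set (Ed := fun x => U1 x * U2 x + lam * (- U x * U1 x + Rpower (U x) p * U1 x)).
  assert (E r <= E 0).
  { apply (mono_dec E Ed); try lra.
    - intros c Hc. destruct (HC c ltac:(lra)) as [HU [HU1 _]]. assert (0 < U c) by (apply Hpos; lra).
      unfold E, Ed. eapply dpl_eq. dsolve; auto.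
      replace (p + 1 - 1) with p by ring. simpl. field. lra.
    - intros c Hc. unfold Ed. rewrite (SOL_ode _ _ _ _ _ _ HS c) by lra.
      assert (INR N >= 3). { apply Rle_ge. replace 3 with (INR 3) by (simpl; ring). apply le_INR; lia. }
      assert (0 <= U1 c ^ 2 * ((INR N - 1) / c)).
      { apply Rmult_le_pos. nra. apply Rlt_le, Rdiv_lt_0_compat; lra. }
      replace (U1 c * (- ((INR N - 1) / c * U1 c) - lam * (- U c + Rpower (U c) p)) +
        lam * (- U c * U1 c + Rpower (U c) p * U1 c)) with (- (U1 c ^ 2 * ((INR N - 1) / c))) by ring.
      lra. }
  unfold E in H. rewrite H0 in H. unfold FF.
  assert (lam * (- U r ^ 2 / 2 + Rpower (U r) (p + 1) / (p + 1)) <= lam * (- U 0 ^ 2 / 2 + Rpower (U 0) (p + 1) / (p + 1))) by nra.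
  apply Rmult_le_reg_l in H2; auto.
Qed.

Lemma Fbound p u d : 1 < p -> 0 < u -> 0 < d -> FF p u <= FF p d ->
  Rpower u (p - 1) <= Rmax (Rpower d (p - 1)) ((p + 1) / 2).
Proof.
  intros Hp Hu Hd HF. unfold FF in HF. rewrite !rp_p1 in HF by auto.
  destruct (Rle_or_lt (Rpower u (p - 1)) (Rmax (Rpower d (p - 1)) ((p + 1) / 2))) as [|Hc]; auto.
  exfalso.
  assert (H1 : Rpower d (p-1) < Rpower u (p-1)) by (eapply Rle_lt_trans; [apply Rmax_l|exact Hc]).
  assert (H2 : (p+1)/2 < Rpower u (p-1)) by (eapply Rle_lt_trans; [apply Rmax_r|exact Hc]).
  assert (Hdu : d < u) by (apply (rp_inv_lt d u (p-1)); lra).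
  set (a := Rpower u (p-1)) in *. set (b := Rpower d (p-1)) in *.
  assert (0 < b) by apply rp_pos.
  assert (HF' : u ^ 2 * (2 * a - (p + 1)) <= d ^ 2 * (2 * b - (p+1))).
  { apply (Rmult_le_reg_l (/ (2 * (p+1)))). apply Rinv_0_lt_compat; lra.
    replace (/ (2 * (p + 1)) * (u ^ 2 * (2 * a - (p + 1)))) with (- u ^ 2 / 2 + a * u ^ 2 / (p + 1)) by (field; lra).
    replace (/ (2 * (p + 1)) * (d ^ 2 * (2 * b - (p + 1)))) with (- d ^ 2 / 2 + b * d ^ 2 / (p + 1)) by (field; lra).
    exact HF. }
  destruct (Rle_or_lt (2*b) (p+1)).
  - assert (0 < u ^ 2 * (2 * a - (p + 1))) by (apply Rmult_lt_0_compat; nra).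
    assert (d ^ 2 * (2 * b - (p + 1)) <= 0). { apply Rmult_le_0_l_pos; nra. } lra.
  - assert (d ^ 2 < u ^ 2) by nra.
    assert (d ^ 2 * (2 * b - (p + 1)) < u ^ 2 * (2 * b - (p + 1))) by nra.
    assert (u ^ 2 * (2 * b - (p + 1)) < u ^ 2 * (2 * a - (p + 1))) by nra. lra.
Qed.

Lemma noninc_deriv U c l : (forall x y, 0 <= x -> x <= y -> y <= 1 -> U y <= U x) ->
  0 <= c <= 1 -> derivable_pt_lim U c l -> l <= 0.
Proof.
  intros Hm Hc HD. destruct (Rle_or_lt l 0) as [|Hl]; auto. exfalso.
  destruct (HD l Hl) as [del Hdel].
  assert (Hd := cond_pos del).
  destruct (Rlt_or_le c 1) as [Hc1|Hc1].
  - set (h := Rmin (del/2) ((1-c)/2)).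
    assert (0 < h) by (unfold h; apply Rmin_glb_lt; lra).
    assert (h <= del/2) by apply Rmin_l. assert (h <= (1-c)/2) by apply Rmin_r.
    specialize (Hdel h ltac:(lra) ltac:(rewrite Rabs_right; lra)).
    assert (U (c + h) <= U c) by (apply Hm; lra).
    assert ((U (c + h) - U c) / h <= 0).
    { unfold Rdiv. assert (0 < / h) by (apply Rinv_0_lt_compat; lra). nra. }
    revert Hdel. apply Rle_not_lt. rewrite Rabs_left1 by lra. lra.
  - set (h := - Rmin (del/2) (1/2)).
    assert (0 < Rmin (del/2) (1/2)) by (apply Rmin_glb_lt; lra).
    assert (Rmin (del/2) (1/2) <= del/2) by apply Rmin_l. assert (Rmin (del/2) (1/2) <= 1/2) by apply Rmin_r.
    specialize (Hdel h ltac:(unfold h; lra) ltac:(unfold h; rewrite Rabs_left; lra)).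
    assert (U c <= U (c + h)) by (apply Hm; unfold h; lra).
    assert ((U (c + h) - U c) / h <= 0).
    { unfold Rdiv. assert (/ h < 0) by (apply Rinv_lt_0_compat; unfold h; lra). nra. }
    revert Hdel. apply Rle_not_lt. rewrite Rabs_left1 by lra. lra.
Qed.

Lemma lip_bound U U1 M : (forall c, 0 <= c <= 1 -> derivable_pt_lim U c (U1 c)) ->
  (forall c, 0 <= c <= 1 -> Rabs (U1 c) <= M) ->
  forall x y, 0 <= x <= 1 -> 0 <= y <= 1 -> Rabs (U x - U y) <= M * Rabs (x - y).
Proof.
  intros HD HM.
  assert (K : forall x y, 0 <= x -> x < y -> y <= 1 -> Rabs (U x - U y) <= M * Rabs (x - y)).
  { intros x y Hx Hxy Hy.
    destruct (MVT_cor2 U U1 x y Hxy) as [c [Hc1 Hc2]]. intros c Hc; apply HD; lra.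
    replace (U x - U y) with (- (U y - U x)) by ring. rewrite Rabs_Ropp, Hc1.
    rewrite Rabs_mult. replace (x - y) with (- (y - x)) by ring. rewrite Rabs_Ropp.
    apply Rmult_le_compat_r. apply Rabs_pos. apply HM; lra. }
  intros x y Hx Hy. destruct (Rtotal_order x y) as [H|[H|H]].
  - apply K; lra.
  - subst. replace (U y - U y) with 0 by ring. replace (y - y) with 0 by ring. rewrite Rabs_R0.
    assert (0 <= M). { eapply Rle_trans. apply Rabs_pos. apply (HM y Hy). } lra.
  - rewrite Rabs_minus_sym, (Rabs_minus_sym x). apply K; lra.
Qed.

Lemma extremes U U1 : (forall c, 0 <= c <= 1 -> derivable_pt_lim U c (U1 c)) ->
  (exists xM, 0 <= xM <= 1 /\ forall c, 0 <= c <= 1 -> U c <= U xM) /\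
  (exists xm, 0 <= xm <= 1 /\ forall c, 0 <= c <= 1 -> U xm <= U c).
Proof.
  intros HD.
  assert (Hc : forall c, 0 <= c <= 1 -> continuity_pt U c).
  { intros c Hc. apply derivable_continuous_pt. exists (U1 c). apply HD; auto. }
  split.
  - destruct (continuity_ab_min (fun x => - U x) 0 1) as [xM [H1 H2]]; try lra.
    intros c Hc'. apply (continuity_pt_opp U). auto.
    exists xM. split; auto. intros c Hc'. specialize (H1 c Hc'). lra.
  - destruct (continuity_ab_min U 0 1) as [xm [H1 H2]]; try lra. auto.
    exists xm. split; auto.
Qed.

Lemma INR_N3 N : (3 <= N)%nat -> 3 <= INR N.
Proof. intros. replace 3 with (INR 3) by (simpl; ring). apply le_INR; lia. Qed.

Lemma Rpower_1_base q : Rpower 1 q = 1.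
Proof. unfold Rpower. rewrite ln_1, Rmult_0_r, exp_0. reflexivity. Qed.

Lemma Gderiv N p lam U U1 U2 s : (3 <= N)%nat -> SOL N p lam U U1 U2 ->
  forall r, 0 <= r <= 1 ->
  derivable_pt_lim (fun x => x ^ (N-1) * U1 x + s * x ^ N) r
     ((INR N - 1) * r ^ (pred (N-1)) * U1 r + r ^ (N-1) * U2 r + s * INR N * r ^ (N - 1)).
Proof.
  intros HN HS r Hr. pose proof (Hderiv N p lam U U1 U2 HN HS r Hr).
  eapply dpl_eq. apply dpl_plus. eassumption. dsolve.
  replace (pred N) with (N-1)%nat by lia.
  set (a := r ^ (N-1)). set (b := r ^ N). ring.
Qed.

Lemma G_sign N p lam U U1 U2 s : (3 <= N)%nat -> SOL N p lam U U1 U2 ->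
  (forall c, 0 < c < 1 -> lam * (U c - Rpower (U c) p) + s * INR N <= 0) ->
  forall r, 0 <= r <= 1 -> r ^ (N-1) * U1 r + s * r ^ N <= 0.
Proof.
  intros HN HS Hs r Hr.
  pose proof HS as (_ & _ & _ & H0 & _).
  set (G := fun x => x ^ (N-1) * U1 x + s * x ^ N).
  change (G r <= 0).
  replace 0 with (G 0) by (unfold G; rewrite H0; rewrite !pow_i by lia; ring).
  apply (mono_dec G (fun r => (INR N - 1) * r ^ (pred (N-1)) * U1 r + r ^ (N-1) * U2 r + s * INR N * r ^ (N - 1)) 0 r); try lra.
  intros c Hc; apply (Gderiv N p lam U U1 U2 s HN HS); lra.
  intros c Hc. cbv beta. rewrite (Hderiv_val N p lam U U1 U2 HN HS c) by lra.
  assert (0 < c ^ (N-1)) by (apply pow_lt; lra). specialize (Hs c ltac:(lra)).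
  replace (lam * c ^ (N - 1) * (U c - Rpower (U c) p) + s * INR N * c ^ (N - 1))
    with (c ^ (N-1) * (lam * (U c - Rpower (U c) p) + s * INR N)) by ring.
  apply Rmult_le_0_l_pos; lra.
Qed.

Lemma G_sign' N p lam U U1 U2 s : (3 <= N)%nat -> SOL N p lam U U1 U2 ->
  (forall c, 0 < c < 1 -> 0 <= lam * (U c - Rpower (U c) p) + s * INR N) ->
  forall r, 0 <= r <= 1 -> 0 <= r ^ (N-1) * U1 r + s * r ^ N.
Proof.
  intros HN HS Hs r Hr.
  pose proof HS as (_ & _ & _ & H0 & _).
  set (G := fun x => x ^ (N-1) * U1 x + s * x ^ N).
  change (0 <= G r).
  replace 0 with (G 0) by (unfold G; rewrite H0; rewrite !pow_i by lia; ring).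
  apply (mono_inc G (fun r => (INR N - 1) * r ^ (pred (N-1)) * U1 r + r ^ (N-1) * U2 r + s * INR N * r ^ (N - 1)) 0 r); try lra.
  intros c Hc; apply (Gderiv N p lam U U1 U2 s HN HS); lra.
  intros c Hc. cbv beta. rewrite (Hderiv_val N p lam U U1 U2 HN HS c) by lra.
  assert (0 < c ^ (N-1)) by (apply pow_lt; lra). specialize (Hs c ltac:(lra)).
  replace (lam * c ^ (N - 1) * (U c - Rpower (U c) p) + s * INR N * c ^ (N - 1))
    with (c ^ (N-1) * (lam * (U c - Rpower (U c) p) + s * INR N)) by ring.
  apply Rmult_le_pos; lra.
Qed.

Lemma Rabs_le_between a b : Rabs a <= b -> - b <= a <= b.
Proof. intros H. split. pose proof (Rabs_pos a). pose proof (Rle_abs (-a)). rewrite Rabs_Ropp in H1. lra. pose proof (Rle_abs a). lra. Qed.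

Lemma Rdiv_le_0_compat a b : 0 <= a -> 0 < b -> 0 <= a / b.
Proof. intros. unfold Rdiv. apply Rmult_le_pos; auto. left; apply Rinv_0_lt_compat; auto. Qed.

Lemma gbound p u Dm : 1 < p -> 0 < u -> 1 <= Dm -> Rpower u (p - 1) <= Dm ->
  Rabs (u - Rpower u p) <= (1 + p * Dm) * Rabs (u - 1).
Proof.
  intros Hp Hu HD Hb.
  destruct (rp_mvt 1 u p) as [z [Hz Heq]]; try lra.
  rewrite Rpower_1_base in Heq.
  assert (0 < z). { eapply Rlt_le_trans; [|apply Hz]. apply Rmin_glb_lt; lra. }
  assert (Hzb : Rpower z (p-1) <= Dm).
  { destruct (Rle_or_lt z 1).
    - assert (Rpower z (p-1) <= 1) by (apply rp_le1; lra). lra.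
    - assert (z <= u). { destruct (Rle_or_lt u 1). rewrite Rmax_left in Hz by lra. lra.
        rewrite Rmax_right in Hz by lra. lra. }
      assert (Rpower z (p-1) <= Rpower u (p-1)) by (apply rp_mono; lra). lra. }
  assert (0 < Rpower z (p-1)) by apply rp_pos.
  replace (u - Rpower u p) with ((u - 1) * (1 - p * Rpower z (p - 1))) by lra.
  rewrite Rabs_mult, Rmult_comm. apply Rmult_le_compat_r. apply Rabs_pos.
  apply Rabs_le. split; nra.
Qed.

Lemma case1 N p lam U U1 U2 : (3 <= N)%nat -> 1 < p -> 0 < lam -> SOL N p lam U U1 U2 ->
  nonconstant_01 U ->
  lam * (1 + p * Rmax (Rpower (U 0) (p-1)) ((p+1)/2)) < INR N -> False.
Proof.
  intros HN Hp Hl HS Hnc Hsmall.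
  set (Dm := Rmax (Rpower (U 0) (p-1)) ((p+1)/2)) in *.
  assert (HDm : 1 <= Dm) by (unfold Dm; eapply Rle_trans; [|apply Rmax_r]; lra).
  pose proof (SOL_pos _ _ _ _ _ _ HS) as Hpos.
  pose proof (SOL_dU _ _ _ _ _ _ HS) as HdU.
  assert (Hb : forall r, 0 <= r <= 1 -> Rpower (U r) (p-1) <= Dm).
  { intros r Hr. apply Fbound; auto. apply Hpos; lra.
    apply (energy_le N p lam U U1 U2); auto. }
  destruct (extremes U U1 HdU) as [[xM [HxM HM]] [xm [Hxm Hm]]].
  assert (Hnot : ~ (forall x y, 0 <= x <= 1 -> 0 <= y <= 1 -> U x = U y)).
  { intros Hc. destruct Hnc as (x & y & Hx & Hy & Hne). apply Hne, Hc; auto. }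
  assert (Hmin : U xm < 1).
  { destruct (Rlt_or_le (U xm) 1) as [|Hge]; auto. exfalso. apply Hnot.
    apply (const_side N p lam U U1 U2); auto. left. intros x Hx. specialize (Hm x Hx). lra. }
  assert (Hmax : 1 < U xM).
  { destruct (Rlt_or_le 1 (U xM)) as [|Hge]; auto. exfalso. apply Hnot.
    apply (const_side N p lam U U1 U2); auto. right. intros x Hx. specialize (HM x Hx). lra. }
  set (Del := U xM - U xm).
  set (C := lam * (1 + p * Dm) * Del).
  assert (HC0 : 0 <= C). { unfold C, Del. apply Rmult_le_pos; [|lra]. apply Rmult_le_pos; [lra|].
    assert (0 <= p * Dm) by (apply Rmult_le_pos; lra). lra. }
  assert (Hg : forall c, 0 < c < 1 -> Rabs (lam * (U c - Rpower (U c) p)) <= C).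
  { intros c Hc. rewrite Rabs_mult, (Rabs_right lam) by lra. unfold C.
    rewrite Rmult_assoc. apply Rmult_le_compat_l; [lra|].
    eapply Rle_trans. apply (gbound p (U c) Dm Hp (Hpos c ltac:(lra)) HDm (Hb c ltac:(lra))).
    apply Rmult_le_compat_l. assert (0 <= p * Dm) by (apply Rmult_le_pos; lra). lra.
    unfold Del. apply Rabs_le. specialize (HM c ltac:(lra)). specialize (Hm c ltac:(lra)). lra. }
  assert (N3 := INR_N3 N HN).
  assert (HU1b : forall r, 0 <= r <= 1 -> Rabs (U1 r) <= C / INR N).
  { intros r Hr.
    assert (A1 := G_sign N p lam U U1 U2 (- (C / INR N)) HN HS).
    assert (A2 := G_sign' N p lam U U1 U2 (C / INR N) HN HS).
    assert (B1 : r ^ (N-1) * U1 r + - (C / INR N) * r ^ N <= 0).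
    { apply A1; auto. intros c Hc. specialize (Hg c Hc). apply Rabs_le_between in Hg.
      replace (- (C / INR N) * INR N) with (- C) by (field; lra). lra. }
    assert (B2 : 0 <= r ^ (N-1) * U1 r + (C / INR N) * r ^ N).
    { apply A2; auto. intros c Hc. specialize (Hg c Hc). apply Rabs_le_between in Hg.
      replace ((C / INR N) * INR N) with C by (field; lra). lra. }
    destruct (Rle_lt_or_eq_dec 0 r (proj1 Hr)) as [Hr0|Hr0].
    - rewrite (powS1 r N) in B1, B2 by lia. replace (pred N) with (N-1)%nat in B1, B2 by lia.
      assert (0 < r ^ (N-1)) by (apply pow_lt; lra).
      assert (0 <= C / INR N) by (apply Rdiv_le_0_compat; lra).
      assert (U1 r <= C / INR N * r).
      { apply (Rmult_le_reg_l (r ^ (N-1))); auto. nra. }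
      assert (- (C / INR N * r) <= U1 r).
      { apply (Rmult_le_reg_l (r ^ (N-1))); auto. nra. }
      apply Rabs_le. split; nra.
    - subst. pose proof HS as (_ & _ & _ & H0 & _). rewrite H0, Rabs_R0.
      apply Rdiv_le_0_compat; lra. }
  assert (Hl2 := lip_bound U U1 (C / INR N) HdU HU1b xM xm HxM Hxm).
  assert (Rabs (xM - xm) <= 1) by (apply Rabs_le; lra).
  assert (0 <= C / INR N) by (apply Rdiv_le_0_compat; lra).
  assert (Del <= C / INR N). { unfold Del. eapply Rle_trans; [apply Rle_abs|]. eapply Rle_trans; [exact Hl2|].
    rewrite <- (Rmult_1_r (C / INR N)) at 2. apply Rmult_le_compat_l; lra. }
  assert (0 < Del) by (unfold Del; lra).
  unfold C in H1. assert (Del * INR N <= lam * (1 + p * Dm) * Del).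
  { apply (Rmult_le_reg_r (/ INR N)). apply Rinv_0_lt_compat; lra.
    replace (Del * INR N * / INR N) with Del by (field; lra). exact H1. }
  nra.
Qed.

Definition kk p := 2 / (p - 1).
Definition al N p := INR N - 2 - 2 * kk p.
Definition be N p := kk p * (INR N - 2 - kk p).

Definition Zf N p lam U U1 r :=
  (r * U1 r + kk p * U r) ^ 2 / 2 - (be N p + lam * r ^ 2) * (U r) ^ 2 / 2
  + lam * r ^ 2 * Rpower (U r) (p + 1) / (p + 1).

Definition Pf N p lam U U1 r := Rpower r (2 * kk p) * Zf N p lam U U1 r.

Definition Zd N p lam U U1 U2 r :=
  (r * U1 r + kk p * U r) * (U1 r + r * U2 r + kk p * U1 r)
  - lam * r * (U r) ^ 2 - (be N p + lam * r ^ 2) * U r * U1 r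
  + lam * (2 * r * Rpower (U r) (p + 1) + r ^ 2 * (p + 1) * Rpower (U r) p * U1 r) / (p + 1).

Definition Pd N p lam U U1 U2 r :=
  2 * kk p * Rpower r (2 * kk p - 1) * Zf N p lam U U1 r + Rpower r (2 * kk p) * Zd N p lam U U1 U2 r.

Lemma P_deriv N p lam U U1 U2 : 1 < p -> SOL N p lam U U1 U2 ->
  forall r, 0 < r <= 1 -> derivable_pt_lim (Pf N p lam U U1) r (Pd N p lam U U1 U2 r).
Proof.
  intros Hp HS r Hr. pose proof HS as (HC & _ & _ & _ & Hpos).
  destruct (HC r ltac:(lra)) as [HU [HU1 _]]. assert (0 < U r) by (apply Hpos; lra).
  unfold Pd, Zd, Pf, Zf. eapply dpl_eq. dsolve; auto. all: try lra.
  cbv beta. replace (p + 1 - 1) with p by ring. simpl. field. lra.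
Qed.

Lemma P_val N p lam U U1 U2 : 1 < p -> SOL N p lam U U1 U2 ->
  forall r, 0 < r < 1 -> Pd N p lam U U1 U2 r =
   Rpower r (2 * kk p - 1) * (- al N p * (r * U1 r + kk p * U r) ^ 2 - lam * r ^ 2 * (U r) ^ 2).
Proof.
  intros Hp HS r Hr. pose proof HS as (HC & _ & _ & _ & Hpos).
  assert (0 < U r) by (apply Hpos; lra).
  unfold Pd, Zd, Zf. rewrite (SOL_ode _ _ _ _ _ _ HS r Hr).
  rewrite (rp_sub1 r (2 * kk p)) by lra.
  rewrite (rp_add1 (U r) p) by lra.
  unfold al, be, kk. field. lra.
Qed.

Lemma H_dec_loc N p lam U U1 U2 b : (3 <= N)%nat -> 1 < p -> 0 < lam -> SOL N p lam U U1 U2 ->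
  0 <= b <= 1 -> (forall c, 0 < c < b -> 1 <= U c) -> b ^ (N-1) * U1 b <= 0.
Proof.
  intros HN Hp Hl HS Hb Hc.
  pose proof HS as (_ & _ & _ & H0 & Hpos).
  set (G := fun x => x ^ (N-1) * U1 x).
  change (G b <= 0). replace 0 with (G 0) by (unfold G; rewrite H0; ring).
  apply (mono_dec G (fun r => (INR N - 1) * r ^ (pred (N-1)) * U1 r + r ^ (N-1) * U2 r) 0 b); try lra.
  intros c Hc'; apply (Hderiv N p lam U U1 U2 HN HS); lra.
  intros c Hc'. rewrite (Hderiv_val N p lam U U1 U2 HN HS c) by lra.
  assert (0 < c ^ (N-1)) by (apply pow_lt; lra).
  assert (1 <= U c) by (apply Hc; lra).
  rewrite (rp_sub1 (U c) p) by lra.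
  assert (1 <= Rpower (U c) (p-1)) by (apply rp_ge1; lra).
  assert (0 <= lam * c ^ (N-1)) by (apply Rmult_le_pos; lra).
  assert (U c - Rpower (U c) (p-1) * U c <= 0) by nra.
  apply Rmult_le_0_l_pos; lra.
Qed.

Lemma al_pos N p : (3 <= N)%nat -> p > p_S N -> 0 < al N p.
Proof.
  intros HN Hp. assert (H3 := INR_N3 N HN). unfold p_S in Hp. unfold al, kk.
  assert (Hp' : (INR N + 2) < p * (INR N - 2)).
  { apply (Rmult_lt_compat_r (INR N - 2)) in Hp; [|lra].
    replace ((INR N + 2) / (INR N - 2) * (INR N - 2)) with (INR N + 2) in Hp by (field; lra). lra. }
  assert (1 < p). { destruct (Rle_or_lt p 1); auto. nra. }
  apply (Rmult_lt_reg_r (p - 1)); [lra|].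
  replace ((INR N - 2 - 2 * (2 / (p - 1))) * (p - 1)) with ((INR N - 2) * (p-1) - 4) by (field; lra).
  lra.
Qed.

Lemma pS_gt1 N p : (3 <= N)%nat -> p > p_S N -> 1 < p.
Proof.
  intros HN Hp. assert (H3 := INR_N3 N HN). unfold p_S in Hp.
  assert (1 < (INR N + 2) / (INR N - 2)).
  { apply (Rmult_lt_reg_r (INR N - 2)); [lra|]. replace ((INR N + 2) / (INR N - 2) * (INR N - 2)) with (INR N + 2) by (field; lra). lra. }
  lra.
Qed.

Lemma k2_be N p : 1 < p -> kk p ^ 2 - be N p = - kk p * al N p.
Proof. intros. unfold be, al, kk. field. lra. Qed.

Lemma case2 N p lam U U1 U2 eta : (3 <= N)%nat -> p > p_S N -> 0 < lam -> SOL N p lam U U1 U2 ->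
  0 < eta -> eta <= INR N -> eta <= INR N * kk p -> eta <= (p + 1) * kk p * al N p / 4 ->
  lam <= 1 -> lam * Rpower 2 (p - 1) <= eta -> lam * ((p + 1) / 2) <= eta ->
  (be N p + 1) / 2 < kk p * al N p / 16 * Rpower (eta / lam) (kk p) ->
  eta < lam * Rpower (U 0) (p - 1) -> False.
Proof.
  intros HN HpS Hl HS He He1 He2 He3 Hl1 Hl2 Hl3 Hl4 Hcase.
  assert (Hp := pS_gt1 N p HN HpS). assert (Hal := al_pos N p HN HpS).
  assert (N3 := INR_N3 N HN).
  assert (Hk : 0 < kk p) by (unfold kk; apply Rdiv_lt_0_compat; lra).
  assert (Hbe : 0 < be N p) by (unfold be; apply Rmult_lt_0_compat; auto; unfold al in Hal; lra).
  pose proof HS as (HC & _ & H1 & H0 & Hpos).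
  pose proof (SOL_dU _ _ _ _ _ _ HS) as HdU.
  set (d := U 0) in *.
  assert (Hd0 : 0 < d) by (apply Hpos; lra).
  set (D := Rpower d (p-1)) in *.
  assert (HD0 : 0 < D) by apply rp_pos.
  assert (Hd2 : 2 < d).
  { apply (rp_inv_lt 2 d (p-1)); try lra.
    fold D. apply (Rmult_lt_reg_l lam); lra. }
  assert (HDp : (p + 1) / 2 <= D) by (apply (Rmult_le_reg_l lam); auto; lra).
  assert (HUd : forall r, 0 <= r <= 1 -> U r <= d).
  { intros r Hr. apply (rp_inv_mono _ _ (p-1)); try lra. apply Hpos; lra.
    assert (Rpower (U r) (p - 1) <= Rmax D ((p + 1) / 2)).
    { apply (Fbound p (U r) d Hp (Hpos r ltac:(lra)) Hd0). apply (energy_le N p lam U U1 U2); auto; lra. }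
    rewrite Rmax_left in H by lra. exact H. }
  set (s := lam * Rpower d p / INR N).
  assert (Hs0 : 0 < s) by (unfold s; apply Rdiv_lt_0_compat; [apply Rmult_lt_0_compat; [lra|apply rp_pos]|lra]).
  assert (HU1 : forall r, 0 <= r <= 1 -> - s * r <= U1 r).
  { intros r Hr.
    assert (A := G_sign' N p lam U U1 U2 s HN HS).
    assert (B : 0 <= r ^ (N-1) * U1 r + s * r ^ N).
    { apply A; auto. intros c Hc. unfold s.
      replace (lam * Rpower d p / INR N * INR N) with (lam * Rpower d p) by (field; lra).
      assert (Rpower (U c) p <= Rpower d p) by (apply rp_mono; [lra|split;[apply Hpos;lra|apply HUd;lra]]).
      assert (0 < U c) by (apply Hpos; lra). nra. }
    destruct (Rle_lt_or_eq_dec 0 r (proj1 Hr)) as [Hr0|Hr0].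
    - rewrite (powS1 r N) in B by lia. replace (pred N) with (N-1)%nat in B by lia.
      assert (0 < r ^ (N-1)) by (apply pow_lt; lra).
      apply (Rmult_le_reg_l (r ^ (N-1))); auto. nra.
    - subst. rewrite H0. lra. }
  assert (HUlow : forall r, 0 <= r <= 1 -> d - s * r ^ 2 / 2 <= U r).
  { intros r Hr.
    set (J := fun x => U x + s / 2 * x ^ 2).
    assert (J 0 <= J r).
    { apply (mono_inc J (fun x => U1 x + s * x) 0 r); try lra.
      - intros c Hc. unfold J. eapply dpl_eq. apply dpl_plus. apply HdU; lra. dsolve.
        simpl. field.
      - intros c Hc. specialize (HU1 c ltac:(lra)). lra. }
    unfold J in H. fold d in H. simpl in H. simpl. lra. }
  set (r0 := sqrt (eta / (lam * D))).
  assert (Hq : 0 < eta / (lam * D)) by (apply Rdiv_lt_0_compat; [lra|apply Rmult_lt_0_compat; lra]).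
  assert (Hq1 : eta / (lam * D) < 1).
  { apply (Rmult_lt_reg_r (lam * D)). apply Rmult_lt_0_compat; lra.
    replace (eta / (lam * D) * (lam * D)) with eta by (field; lra). lra. }
  assert (Hr0p : 0 < r0) by (apply sqrt_lt_R0; auto).
  assert (Hr02 : r0 ^ 2 = eta / (lam * D)) by (unfold r0; simpl; rewrite Rmult_1_r; apply sqrt_sqrt; left; exact Hq).
  assert (Hr01 : r0 < 1).
  { destruct (Rlt_or_le r0 1); auto. assert (1 <= r0 ^ 2) by nra. lra. }
  assert (Hsr0 : s * r0 ^ 2 = d * eta / INR N).
  { rewrite Hr02. unfold s. unfold D. rewrite (rp_sub1 d p) by lra. pose proof (rp_pos d (p-1)).
    field. repeat split; lra. }
  assert (Hhalf : forall r, 0 <= r <= r0 -> d / 2 <= U r).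
  { intros r Hr. eapply Rle_trans; [|apply HUlow; lra].
    assert (s * r ^ 2 <= s * r0 ^ 2).
    { apply Rmult_le_compat_l; [lra|]. apply pow_incr; lra. }
    rewrite Hsr0 in H.
    assert (d * eta / INR N <= d).
    { apply (Rmult_le_reg_r (INR N)); [lra|]. replace (d * eta / INR N * INR N) with (d * eta) by (field; lra). nra. }
    lra. }
  assert (HU1r0 : U1 r0 <= 0).
  { assert (r0 ^ (N-1) * U1 r0 <= 0).
    { apply (H_dec_loc N p lam U U1 U2); auto; try lra. intros c Hc. specialize (Hhalf c ltac:(lra)). lra. }
    assert (0 < r0 ^ (N-1)) by (apply pow_lt; lra). nra. }
  set (V := U r0).
  assert (HV1 : d / 2 <= V) by (apply Hhalf; lra).
  assert (HV2 : V <= d) by (apply HUd; lra).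
  set (X := r0 * U1 r0).
  assert (HX1 : X <= 0) by (unfold X; nra).
  assert (HX2 : - (d * eta / INR N) <= X).
  { unfold X. rewrite <- Hsr0. specialize (HU1 r0 ltac:(lra)). simpl. nra. }
  assert (HX3 : - (2 * kk p * V) <= X).
  { assert (d * eta / INR N <= kk p * d).
    { apply (Rmult_le_reg_r (INR N)); [lra|]. replace (d * eta / INR N * INR N) with (d * eta) by (field; lra). nra. }
    nra. }
  assert (HZ : Zf N p lam U U1 r0 <= - (kk p * al N p) * V ^ 2 / 4).
  { unfold Zf. fold V. fold X.
    assert (HV0 : 0 < V) by lra.
    rewrite (rp_p1 V p) by lra.
    assert (Rpower V (p-1) <= D) by (apply rp_mono; lra).
    assert (lam * r0 ^ 2 * D = eta) by (rewrite Hr02; field; lra).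
    assert (lam * r0 ^ 2 * (Rpower V (p - 1) * V ^ 2) <= eta * V ^ 2).
    { rewrite <- H2. assert (0 <= lam * r0 ^ 2) by (apply Rmult_le_pos; [lra|apply pow_le; lra]).
      assert (0 <= V ^ 2) by apply pow2_ge_0.
      replace (lam * r0 ^ 2 * D * V ^ 2) with ((lam * r0 ^ 2) * (D * V^2)) by field.
      replace (lam * r0 ^ 2 * (Rpower V (p - 1) * V ^ 2)) with ((lam * r0 ^ 2) * (Rpower V (p - 1) * V^2)) by field.
      apply Rmult_le_compat_l; auto. apply Rmult_le_compat_r; auto. }
    assert ((X + kk p * V) ^ 2 <= kk p ^ 2 * V ^ 2) by nra.
    assert (HK := k2_be N p Hp).
    assert (0 <= lam * r0 ^ 2 * V ^ 2) by (apply Rmult_le_pos; [apply Rmult_le_pos; [lra|apply pow_le; lra]|apply pow2_ge_0]).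
    assert (eta / (p + 1) <= kk p * al N p / 4).
    { apply (Rmult_le_reg_r (p+1)); [lra|]. replace (eta / (p + 1) * (p + 1)) with eta by (field; lra). lra. }
    assert (eta * V ^ 2 / (p + 1) <= kk p * al N p / 4 * V ^ 2).
    { replace (eta * V ^ 2 / (p + 1)) with (eta / (p+1) * V ^ 2) by (field; lra).
      apply Rmult_le_compat_r; [apply pow2_ge_0|lra]. }
    assert (lam * r0 ^ 2 * (Rpower V (p - 1) * V ^ 2) / (p + 1) <= eta * V ^ 2 / (p + 1)).
    { unfold Rdiv. apply Rmult_le_compat_r; [left; apply Rinv_0_lt_compat; lra|lra]. }
    replace ((be N p + lam * r0 ^ 2) * V ^ 2 / 2) with (be N p * V ^ 2 / 2 + lam * r0 ^ 2 * V ^ 2 / 2) by field.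
    assert (Hbe' : be N p = kk p ^ 2 + kk p * al N p) by lra.
    assert (be N p * V ^ 2 = kk p ^ 2 * V ^ 2 + kk p * al N p * V ^ 2).
    { rewrite Hbe'. field. }
    assert ((X + kk p * V) ^ 2 / 2 <= kk p ^ 2 * V ^ 2 / 2) by lra.
    lra. }
  set (k := kk p) in *.
  assert (HRk : Rpower r0 (2 * k) * d ^ 2 = Rpower (eta / lam) k).
  { assert (E2 : forall x, 0 < x -> Rpower x 2 = x ^ 2).
    { intros x Hx. replace 2 with (INR 2) by (simpl; field). apply Rpower_pow; auto. }
    rewrite <- Rpower_mult, E2, Hr02 by lra.
    assert (Hd2' : d ^ 2 = Rpower D k).
    { unfold D, k. rewrite Rpower_mult. replace ((p - 1) * kk p) with 2 by (unfold kk; field; lra).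
      rewrite E2; auto. }
    rewrite Hd2', Rpower_mult_distr; auto. f_equal. field. lra. }
  assert (HRp : 0 < Rpower r0 (2 * k)) by apply rp_pos.
  assert (HP0 : Pf N p lam U U1 r0 <= - (k * al N p / 16) * Rpower (eta / lam) k).
  { unfold Pf. fold k. rewrite <- HRk.
    assert (d ^ 2 / 4 <= V ^ 2) by nra.
    assert (0 < k * al N p) by (apply Rmult_lt_0_compat; lra).
    assert (Rpower r0 (2 * k) * Zf N p lam U U1 r0 <= Rpower r0 (2 * k) * (- (k * al N p) * V ^ 2 / 4))
      by (apply Rmult_le_compat_l; lra).
    assert (Rpower r0 (2 * k) * (k * al N p) * (d ^ 2 / 4) <= Rpower r0 (2 * k) * (k * al N p) * V ^ 2).
    { apply Rmult_le_compat_l; [|lra]. apply Rmult_le_pos; lra. }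
    lra. }
  assert (HPdec : forall r, r0 <= r <= 1 -> Pf N p lam U U1 r <= Pf N p lam U U1 r0).
  { intros r Hr. apply (mono_dec _ (Pd N p lam U U1 U2)); try lra.
    - intros c Hc. apply (P_deriv N p lam U U1 U2 Hp HS). lra.
    - intros c Hc. rewrite (P_val N p lam U U1 U2 Hp HS c) by lra.
      assert (0 < Rpower c (2 * kk p - 1)) by apply rp_pos.
      apply Rmult_le_0_l_pos; [lra|]. fold k.
      assert (0 <= al N p * (c * U1 c + k * U c) ^ 2) by (apply Rmult_le_pos; [lra|apply pow2_ge_0]).
      assert (0 <= lam * c ^ 2 * U c ^ 2) by (apply Rmult_le_pos; [apply Rmult_le_pos; [lra|apply pow2_ge_0]|apply pow2_ge_0]).
      lra. }
  assert (HPlow : forall r, 0 < r <= 1 -> - ((be N p + 1) * U r ^ 2 / 2) <= Pf N p lam U U1 r).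
  { intros r Hr. unfold Pf, Zf. fold k.
    assert (0 < U r) by (apply Hpos; lra).
    assert (Rpower r (2 * k) <= 1) by (apply rp_le1; lra).
    assert (0 < Rpower r (2 * k)) by apply rp_pos.
    assert (0 <= lam * r ^ 2 * Rpower (U r) (p + 1) / (p + 1)).
    { apply Rdiv_le_0_compat; [|lra]. apply Rmult_le_pos; [apply Rmult_le_pos; [lra|apply pow2_ge_0]|left; apply rp_pos]. }
    assert (0 <= (r * U1 r + k * U r) ^ 2 / 2) by (assert (0 <= (r * U1 r + k * U r) ^ 2) by apply pow2_ge_0; lra).
    assert (lam * r ^ 2 <= 1). { assert (r ^ 2 <= 1) by nra. assert (0 <= r ^ 2) by apply pow2_ge_0. nra. }
    assert (0 <= U r ^ 2) by apply pow2_ge_0.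
    set (Q := (r * U1 r + k * U r) ^ 2 / 2 - (be N p + lam * r ^ 2) * U r ^ 2 / 2 +
      lam * r ^ 2 * Rpower (U r) (p + 1) / (p + 1)).
    assert (HQ : - ((be N p + 1) * U r ^ 2 / 2) <= Q).
    { unfold Q. assert ((be N p + lam * r ^ 2) * U r ^ 2 <= (be N p + 1) * U r ^ 2) by (apply Rmult_le_compat_r; lra). lra. }
    assert (0 <= (be N p + 1) * U r ^ 2 / 2) by (apply Rdiv_le_0_compat; [apply Rmult_le_pos; lra|lra]).
    destruct (Rle_or_lt 0 Q).
    - assert (0 <= Rpower r (2 * k) * Q) by (apply Rmult_le_pos; lra). lra.
    - assert (Rpower r (2 * k) * Q >= Q) by nra. lra. }
  assert (HUgt : forall r, r0 <= r <= 1 -> 1 < U r).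
  { intros r Hr. assert (0 < U r) by (apply Hpos; lra).
    specialize (HPlow r ltac:(lra)). specialize (HPdec r Hr).
    assert ((be N p + 1) / 2 < (be N p + 1) * U r ^ 2 / 2) by lra.
    assert (1 < U r ^ 2).
    { apply (Rmult_lt_reg_l ((be N p + 1) / 2)); [lra|]. replace ((be N p + 1) / 2 * U r ^ 2) with ((be N p + 1) * U r ^ 2 / 2) by field. lra. }
    nra. }
  set (G := fun x => x ^ (N-1) * U1 x).
  assert (G 1 < G r0).
  { apply (mono_dec_strict G (fun r => (INR N - 1) * r ^ (pred (N-1)) * U1 r + r ^ (N-1) * U2 r) r0 1); try lra.
    intros c Hc'; apply (Hderiv N p lam U U1 U2 HN HS); lra.
    intros c Hc'. rewrite (Hderiv_val N p lam U U1 U2 HN HS c) by lra.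
    assert (0 < c ^ (N-1)) by (apply pow_lt; lra).
    assert (1 < U c) by (apply HUgt; lra).
    rewrite (rp_sub1 (U c) p) by lra.
    assert (1 < Rpower (U c) (p-1)) by (apply rp_gt1; lra).
    assert (0 < lam * c ^ (N-1)) by (apply Rmult_lt_0_compat; lra).
    assert (U c - Rpower (U c) (p-1) * U c < 0) by nra.
    nra. }
  unfold G in H. rewrite H1 in H.
  assert (0 < r0 ^ (N-1)) by (apply pow_lt; lra).
  assert (r0 ^ (N-1) * U1 r0 <= 0) by nra.
  rewrite pow1 in H. lra.
Qed.

Lemma Rmax_le_sum a b : 0 <= a -> 0 <= b -> Rmax a b <= a + b.
Proof. intros. unfold Rmax. destruct (Rle_dec a b); lra. Qed.

Lemma reg_to_SOL N p lam U : regular_solution N p lam U -> exists U1 U2, SOL N p lam U U1 U2.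
Proof. intros (U1 & U2 & H). exists U1, U2. exact H. Qed.

Lemma part1 N p : (3 <= N)%nat -> p > p_S N ->
  exists lam_low : R, lam_low > 0 /\
     forall lam U, 0 < lam < lam_low ->
       regular_solution N p lam U -> ~ nonconstant_01 U.
Proof.
  intros HN HpS.
  assert (Hp := pS_gt1 N p HN HpS). assert (Hal := al_pos N p HN HpS).
  assert (N3 := INR_N3 N HN).
  assert (Hk : 0 < kk p) by (unfold kk; apply Rdiv_lt_0_compat; lra).
  assert (Hbe : 0 < be N p) by (unfold be; apply Rmult_lt_0_compat; auto; unfold al in Hal; lra).
  set (eta := Rmin (Rmin (INR N) (INR N * kk p)) (Rmin ((p+1) * kk p * al N p / 4) (INR N / (2 * p)))).
  assert (Heta : 0 < eta).
  { unfold eta. repeat apply Rmin_glb_lt; try lra.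
    apply Rmult_lt_0_compat; lra.
    apply Rdiv_lt_0_compat; [|lra]. apply Rmult_lt_0_compat; [apply Rmult_lt_0_compat|]; lra.
    apply Rdiv_lt_0_compat; lra. }
  assert (He1 : eta <= INR N) by (unfold eta; eapply Rle_trans; [apply Rmin_l|apply Rmin_l]).
  assert (He2 : eta <= INR N * kk p) by (unfold eta; eapply Rle_trans; [apply Rmin_l|apply Rmin_r]).
  assert (He3 : eta <= (p+1) * kk p * al N p / 4) by (unfold eta; eapply Rle_trans; [apply Rmin_r|apply Rmin_l]).
  assert (He4 : eta <= INR N / (2 * p)) by (unfold eta; eapply Rle_trans; [apply Rmin_r|apply Rmin_r]).
  set (Cst := 8 * (be N p + 1) / (kk p * al N p)).
  assert (HCst : 0 < Cst) by (unfold Cst; apply Rdiv_lt_0_compat; [lra|apply Rmult_lt_0_compat; lra]).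
  set (l1 := Rmin 1 (eta / Rpower 2 (p - 1))).
  set (l2 := Rmin (eta / ((p + 1) / 2)) (INR N / (2 * (1 + p * ((p + 1) / 2))))).
  set (l3 := eta / Rpower (Cst + 1) (/ kk p)).
  exists (Rmin l1 (Rmin l2 l3)).
  assert (P2 : 0 < Rpower 2 (p-1)) by apply rp_pos.
  assert (P3 : 0 < Rpower (Cst + 1) (/ kk p)) by apply rp_pos.
  split.
  { unfold l1, l2, l3. repeat apply Rmin_glb_lt; try lra; apply Rdiv_lt_0_compat; try lra.
    apply Rmult_lt_0_compat; [lra|]. assert (0 <= p * ((p + 1) / 2)) by (apply Rmult_le_pos; lra). lra. }
  intros lam U [Hl Hlt] Hreg Hnc.
  destruct (reg_to_SOL N p lam U Hreg) as (U1 & U2 & HS).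
  assert (Hl1 : lam < 1) by (eapply Rlt_le_trans; [exact Hlt|]; eapply Rle_trans; [apply Rmin_l|apply Rmin_l]).
  assert (Hl2 : lam < eta / Rpower 2 (p - 1)) by (eapply Rlt_le_trans; [exact Hlt|]; eapply Rle_trans; [apply Rmin_l|apply Rmin_r]).
  assert (Hl3 : lam < eta / ((p + 1) / 2)).
  { eapply Rlt_le_trans; [exact Hlt|]. eapply Rle_trans; [apply Rmin_r|]. eapply Rle_trans; [apply Rmin_l|apply Rmin_l]. }
  assert (Hl4 : lam < INR N / (2 * (1 + p * ((p + 1) / 2)))).
  { eapply Rlt_le_trans; [exact Hlt|]. eapply Rle_trans; [apply Rmin_r|]. eapply Rle_trans; [apply Rmin_l|apply Rmin_r]. }
  assert (Hl5 : lam < l3).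
  { eapply Rlt_le_trans; [exact Hlt|]. eapply Rle_trans; [apply Rmin_r|apply Rmin_r]. }
  destruct (Rle_or_lt (lam * Rpower (U 0) (p - 1)) eta) as [Hc|Hc].
  -
    apply (case1 N p lam U U1 U2); auto.
    assert (H0 : 0 < Rpower (U 0) (p-1)) by apply rp_pos.
    assert (HM := Rmax_le_sum (Rpower (U 0) (p - 1)) ((p + 1) / 2) ltac:(lra) ltac:(lra)).
    assert (lam * Rmax (Rpower (U 0) (p - 1)) ((p + 1) / 2) <= eta + lam * ((p+1)/2)).
    { eapply Rle_trans. apply Rmult_le_compat_l; [lra|exact HM]. lra. }
    assert (p * eta <= INR N / 2).
    { apply (Rmult_le_reg_r (/ p)). apply Rinv_0_lt_compat; lra.
      replace (p * eta * / p) with eta by (field; lra).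
      replace (INR N / 2 * / p) with (INR N / (2 * p)) by (field; lra). lra. }
    assert (lam * (1 + p * ((p + 1) / 2)) < INR N / 2).
    { assert (0 < 1 + p * ((p + 1) / 2)) by nra.
      apply (Rmult_lt_compat_r (1 + p * ((p + 1) / 2))) in Hl4; auto.
      replace (INR N / (2 * (1 + p * ((p + 1) / 2))) * (1 + p * ((p + 1) / 2))) with (INR N / 2) in Hl4 by (field; lra).
      lra. }
    set (Mx := Rmax (Rpower (U 0) (p - 1)) ((p + 1) / 2)) in *.
    assert (p * (lam * Mx) <= p * (eta + lam * ((p + 1) / 2))) by (apply Rmult_le_compat_l; lra).
    replace (lam * (1 + p * Mx)) with (lam + p * (lam * Mx)) by field.
    replace (lam * (1 + p * ((p + 1) / 2))) with (lam + p * lam * ((p + 1) / 2)) in H2 by field.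
    lra.
  -
    apply (case2 N p lam U U1 U2 eta); auto; try lra.
    + apply (Rmult_le_reg_r (/ Rpower 2 (p-1))). apply Rinv_0_lt_compat; lra.
      replace (lam * Rpower 2 (p - 1) * / Rpower 2 (p - 1)) with lam by (field; lra). unfold Rdiv in Hl2. lra.
    + apply (Rmult_le_reg_r (/ ((p+1)/2))). apply Rinv_0_lt_compat; lra.
      replace (lam * ((p + 1) / 2) * / ((p + 1) / 2)) with lam by (field; lra). unfold Rdiv in Hl3. lra.
    + assert (Hq : Rpower (Cst + 1) (/ kk p) < eta / lam).
      { unfold l3 in Hl5. apply (Rmult_lt_reg_r lam); auto.
        replace (eta / lam * lam) with eta by (field; lra).
        apply (Rmult_lt_compat_r (Rpower (Cst + 1) (/ kk p))) in Hl5; auto.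
        replace (eta / Rpower (Cst + 1) (/ kk p) * Rpower (Cst + 1) (/ kk p)) with eta in Hl5 by (field; lra).
        lra. }
      assert (Cst + 1 < Rpower (eta / lam) (kk p)).
      { assert (Ek : Rpower (Rpower (Cst + 1) (/ kk p)) (kk p) = Cst + 1).
        { rewrite Rpower_mult. replace (/ kk p * kk p) with 1 by (field; lra). rewrite Rpower_1; lra. }
        rewrite <- Ek. apply Rlt_Rpower_l; auto. }
      assert (0 < kk p * al N p) by (apply Rmult_lt_0_compat; lra).
      assert (kk p * al N p / 16 * Cst = (be N p + 1) / 2) by (unfold Cst; field; lra).
      assert (kk p * al N p / 16 * Cst < kk p * al N p / 16 * Rpower (eta / lam) (kk p)).
      { apply Rmult_lt_compat_l; [lra|lra]. }
      lra.
Qed.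

Definition cc N p := (INR N - 2) / 2 - INR N / (p + 1).

Definition Kf N p lam A B U U1 r :=
  r * r ^ (N-1) * ((U1 r) ^ 2 / 2 + lam * (- (U r) ^ 2 / 2 + Rpower (U r) (p + 1) / (p + 1)))
  + (INR N - 2) / 2 * r ^ (N-1) * U r * U1 r + lam * (r * r ^ (N-1)) * B / INR N
  - A * r ^ (N-1) * U1 r.

Definition Kd N p lam A B U U1 U2 r :=
  (r ^ (N-1) + r * ((INR N - 1) * r ^ (pred (N-1)))) *
     ((U1 r) ^ 2 / 2 + lam * (- (U r) ^ 2 / 2 + Rpower (U r) (p + 1) / (p + 1)))
  + r * r ^ (N-1) * (U1 r * U2 r + lam * (- U r * U1 r + Rpower (U r) p * U1 r))
  + (INR N - 2) / 2 * ((INR N - 1) * r ^ (pred (N-1)) * U r * U1 r + r ^ (N-1) * (U1 r * U1 r + U r * U2 r))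
  + lam * (r ^ (N-1) + r * ((INR N - 1) * r ^ (pred (N-1)))) * B / INR N
  - A * ((INR N - 1) * r ^ (pred (N-1)) * U1 r + r ^ (N-1) * U2 r).

Lemma K_deriv N p lam A B U U1 U2 : (3 <= N)%nat -> 1 < p -> SOL N p lam U U1 U2 ->
  forall r, 0 <= r <= 1 -> derivable_pt_lim (Kf N p lam A B U U1) r (Kd N p lam A B U U1 U2 r).
Proof.
  intros HN Hp HS r Hr. pose proof HS as (HC & _ & _ & _ & Hpos).
  destruct (HC r Hr) as [HU [HU1 _]]. assert (0 < U r) by (apply Hpos; lra).
  assert (N3 := INR_N3 N HN).
  unfold Kd, Kf. eapply dpl_eq. dsolve; auto.
  cbv beta. replace (p + 1 - 1) with p by field. rewrite INR_N1 by lia. simpl. field. lra.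
Qed.

Lemma K_val N p lam A B U U1 U2 : (3 <= N)%nat -> 1 < p -> SOL N p lam U U1 U2 ->
  forall r, 0 < r < 1 -> Kd N p lam A B U U1 U2 r =
   - lam * r ^ (N-1) * ((U r) ^ 2 + cc N p * Rpower (U r) (p + 1) + A * (U r - Rpower (U r) p) - B).
Proof.
  intros HN Hp HS r Hr. pose proof HS as (HC & _ & _ & _ & Hpos).
  assert (0 < U r) by (apply Hpos; lra). assert (N3 := INR_N3 N HN).
  unfold Kd, cc. rewrite (SOL_ode _ _ _ _ _ _ HS r Hr).
  rewrite (powS1 r (N-1)) by lia.
  rewrite (rp_add1 (U r) p) by lra.
  field. lra.
Qed.

Definition m0 N p := Rmin (Rmin (2 * cc N p / INR N) (2 / INR N)) (Rpower (2 / INR N) (/ (p - 1))).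

Lemma cc_pos N p : (3 <= N)%nat -> p > p_S N -> 0 < cc N p.
Proof.
  intros HN Hp. assert (H3 := INR_N3 N HN). assert (Hp1 := pS_gt1 N p HN Hp).
  unfold p_S in Hp. unfold cc.
  assert (Hp' : (INR N + 2) < p * (INR N - 2)).
  { apply (Rmult_lt_compat_r (INR N - 2)) in Hp; [|lra].
    replace ((INR N + 2) / (INR N - 2) * (INR N - 2)) with (INR N + 2) in Hp by (field; lra). lra. }
  apply (Rmult_lt_reg_r (2 * (p + 1))); [lra|].
  replace (((INR N - 2) / 2 - INR N / (p + 1)) * (2 * (p + 1))) with ((INR N - 2) * (p + 1) - 2 * INR N) by (field; lra).
  lra.
Qed.

Lemma m0_pos N p : (3 <= N)%nat -> p > p_S N -> 0 < m0 N p.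
Proof.
  intros HN Hp. assert (H3 := INR_N3 N HN). assert (Hc := cc_pos N p HN Hp).
  unfold m0. repeat apply Rmin_glb_lt. apply Rdiv_lt_0_compat; lra. apply Rdiv_lt_0_compat; lra. apply rp_pos.
Qed.

Lemma psi_nonneg N p m u : (3 <= N)%nat -> p > p_S N -> 0 < m -> m < m0 N p -> m <= u ->
  0 <= u ^ 2 + cc N p * Rpower u (p + 1) + INR N * m / 2 * (u - Rpower u p) - INR N * m ^ 2 / 2.
Proof.
  intros HN HpS Hm Hm0 Hmu.
  assert (H3 := INR_N3 N HN). assert (Hc := cc_pos N p HN HpS). assert (Hp := pS_gt1 N p HN HpS).
  assert (Hu : 0 < u) by lra.
  assert (Hm1 : m < 2 * cc N p / INR N) by (eapply Rlt_le_trans; [exact Hm0|]; unfold m0; eapply Rle_trans; [apply Rmin_l|apply Rmin_l]).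
  assert (Hm2 : m < 2 / INR N) by (eapply Rlt_le_trans; [exact Hm0|]; unfold m0; eapply Rle_trans; [apply Rmin_l|apply Rmin_r]).
  assert (Hm3 : m < Rpower (2 / INR N) (/ (p - 1))) by (eapply Rlt_le_trans; [exact Hm0|]; unfold m0; apply Rmin_r).
  set (A := INR N * m / 2).
  assert (HA : 0 < A) by (unfold A; apply Rdiv_lt_0_compat; [apply Rmult_lt_0_compat|]; lra).
  assert (HAc : A <= cc N p).
  { unfold A. apply (Rmult_le_reg_r (2 / INR N)). apply Rdiv_lt_0_compat; lra.
    replace (INR N * m / 2 * (2 / INR N)) with m by (field; lra).
    apply (Rmult_lt_compat_r (INR N / 2)) in Hm1; [|apply Rdiv_lt_0_compat; lra].
    replace (2 * cc N p / INR N * (INR N / 2)) with (cc N p) in Hm1 by (field; lra).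
    replace (cc N p * (2 / INR N)) with (2 * cc N p / INR N) by (field; lra).
    apply (Rmult_le_reg_r (INR N / 2)). apply Rdiv_lt_0_compat; lra.
    replace (2 * cc N p / INR N * (INR N / 2)) with (cc N p) by (field; lra). lra. }
  assert (HA1 : A <= 1).
  { unfold A. apply (Rmult_lt_compat_r (INR N / 2)) in Hm2; [|apply Rdiv_lt_0_compat; lra].
    replace (2 / INR N * (INR N / 2)) with 1 in Hm2 by (field; lra). lra. }
  rewrite (rp_add1 u p) by lra.
  assert (HW : 0 < Rpower u p) by apply rp_pos.
  assert (Hmain : A * Rpower u p <= u ^ 2 + cc N p * (Rpower u p * u)).
  { destruct (Rle_or_lt 1 u) as [Hu1|Hu1].
    - assert (A * Rpower u p <= cc N p * Rpower u p) by (apply Rmult_le_compat_r; lra).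
      assert (cc N p * Rpower u p <= cc N p * (Rpower u p * u)) by (apply Rmult_le_compat_l; nra).
      assert (0 <= u ^ 2) by apply pow2_ge_0.
      assert (0 <= cc N p * (Rpower u p * u)) by (apply Rmult_le_pos; [lra|apply Rmult_le_pos; lra]). lra.
    - assert (0 <= cc N p * (Rpower u p * u)) by (apply Rmult_le_pos; [lra|apply Rmult_le_pos; lra]).
      assert (A * Rpower u (p - 1) <= u).
      { destruct (Rle_or_lt 2 p) as [Hp2|Hp2].
        - rewrite (rp_sub1 u (p-1)) by lra.
          assert (Rpower u (p - 1 - 1) <= 1) by (apply rp_le1; lra).
          assert (0 < Rpower u (p - 1 - 1)) by apply rp_pos.
          assert (A * Rpower u (p - 1 - 1) <= 1) by nra.
          replace (A * (Rpower u (p - 1 - 1) * u)) with ((A * Rpower u (p - 1 - 1)) * u) by field. nra.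
        -
          assert (Es : forall x, 0 < x -> x = Rpower x (p - 1) * Rpower x (2 - p)).
          { intros x Hx. rewrite <- Rpower_plus. replace (p - 1 + (2 - p)) with 1 by field. rewrite Rpower_1; auto. }
          assert (Rpower m (2 - p) <= Rpower u (2 - p)) by (apply rp_mono; lra).
          assert (0 < Rpower m (p-1)) by apply rp_pos. assert (0 < Rpower u (p-1)) by apply rp_pos.
          assert (Hmu' : m * Rpower u (p - 1) <= Rpower m (p - 1) * u).
          { rewrite (Es m) at 1 by lra. rewrite (Es u) at 2 by lra.
            replace (Rpower m (p - 1) * Rpower m (2 - p) * Rpower u (p - 1)) with
              ((Rpower m (p - 1) * Rpower u (p - 1)) * Rpower m (2 - p)) by field.
            replace (Rpower m (p - 1) * (Rpower u (p - 1) * Rpower u (2 - p))) with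
              ((Rpower m (p - 1) * Rpower u (p - 1)) * Rpower u (2 - p)) by field.
            apply Rmult_le_compat_l; [|lra]. apply Rmult_le_pos; lra. }
          assert (Hmp : Rpower m (p - 1) <= 2 / INR N).
          { assert (Hq : Rpower m (p - 1) < Rpower (Rpower (2 / INR N) (/ (p - 1))) (p - 1)) by (apply Rlt_Rpower_l; lra).
            rewrite Rpower_mult in Hq. replace (/ (p - 1) * (p - 1)) with 1 in Hq by (field; lra).
            rewrite Rpower_1 in Hq by (apply Rdiv_lt_0_compat; lra). lra. }
          unfold A. replace (INR N * m / 2 * Rpower u (p - 1)) with (INR N / 2 * (m * Rpower u (p - 1))) by field.
          assert (INR N / 2 * (m * Rpower u (p - 1)) <= INR N / 2 * (Rpower m (p - 1) * u)).
          { apply Rmult_le_compat_l; [|lra]. apply Rdiv_le_0_compat; lra. }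
          assert (INR N / 2 * (Rpower m (p - 1) * u) <= u).
          { replace (INR N / 2 * (Rpower m (p - 1) * u)) with ((INR N / 2 * Rpower m (p - 1)) * u) by field.
            assert (INR N / 2 * Rpower m (p - 1) <= 1).
            { apply (Rmult_le_compat_l (INR N / 2)) in Hmp; [|apply Rdiv_le_0_compat; lra].
              replace (INR N / 2 * (2 / INR N)) with 1 in Hmp by (field; lra). lra. }
            nra. }
          lra. }
      assert (Eq : Rpower u p = Rpower u (p - 1) * u) by (apply rp_sub1; lra).
      assert (A * Rpower u p <= u * u).
      { rewrite Eq. replace (A * (Rpower u (p - 1) * u)) with ((A * Rpower u (p - 1)) * u) by field. nra. }
      simpl. lra. }
  assert (0 <= A * (u - m)) by (apply Rmult_le_pos; lra).
  replace (INR N * m ^ 2 / 2) with (A * m) by (unfold A; simpl; field).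
  lra.
Qed.

Lemma m_lower N p lam U U1 U2 : (3 <= N)%nat -> p > p_S N -> 0 < lam -> SOL N p lam U U1 U2 ->
  (forall x y, 0 <= x -> x <= y -> y <= 1 -> U y <= U x) -> m0 N p <= U 1.
Proof.
  intros HN HpS Hl HS Hdec.
  assert (H3 := INR_N3 N HN). assert (Hp := pS_gt1 N p HN HpS).
  pose proof HS as (HC & _ & H1 & H0 & Hpos).
  destruct (Rle_or_lt (m0 N p) (U 1)) as [|Hlt]; auto. exfalso.
  set (m := U 1) in *. assert (Hm : 0 < m) by (apply Hpos; lra).
  set (A := INR N * m / 2). set (B := INR N * m ^ 2 / 2).
  assert (HK : Kf N p lam A B U U1 1 <= Kf N p lam A B U U1 0).
  { apply (mono_dec _ (Kd N p lam A B U U1 U2)); try lra.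
    - intros c Hc. apply (K_deriv N p lam A B U U1 U2 HN Hp HS c Hc).
    - intros c Hc. rewrite (K_val N p lam A B U U1 U2 HN Hp HS c Hc).
      assert (0 < c ^ (N-1)) by (apply pow_lt; lra).
      assert (0 <= (U c) ^ 2 + cc N p * Rpower (U c) (p + 1) + A * (U c - Rpower (U c) p) - B).
      { unfold A, B. apply psi_nonneg; auto. apply Hdec; lra. }
      assert (0 <= lam * c ^ (N-1)) by (apply Rmult_le_pos; lra).
      replace (- lam * c ^ (N - 1) * (U c ^ 2 + cc N p * Rpower (U c) (p + 1) + A * (U c - Rpower (U c) p) - B))
        with (- ((lam * c ^ (N - 1)) * (U c ^ 2 + cc N p * Rpower (U c) (p + 1) + A * (U c - Rpower (U c) p) - B))) by field.
      assert (0 <= (lam * c ^ (N - 1)) * (U c ^ 2 + cc N p * Rpower (U c) (p + 1) + A * (U c - Rpower (U c) p) - B))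
        by (apply Rmult_le_pos; lra).
      lra. }
  unfold Kf in HK. rewrite H1, pow1 in HK. rewrite !pow_i in HK by lia. rewrite H0 in HK. fold m in HK.
  assert (0 < Rpower m (p + 1)) by apply rp_pos.
  assert (Kf1 : 0 < lam * (Rpower m (p + 1) / (p + 1))) by (apply Rmult_lt_0_compat; [lra|apply Rdiv_lt_0_compat; lra]).
  unfold B, A in HK.
  match type of HK with ?a <= ?b =>
    assert (Ea : a = lam * (Rpower m (p + 1) / (p + 1))) by (field; lra);
    assert (Eb : b = 0) by (field; lra) end.
  lra.
Qed.

Lemma Rmult_le_0_r_neg a b : a <= 0 -> 0 <= b -> a * b <= 0.
Proof. intros; nra. Qed.

Lemma bernoulli u p : 1 <= u -> 1 < p -> (p - 1) * (u - 1) <= Rpower u p - u.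
Proof.
  intros Hu Hp. destruct (rp_mvt 1 u p) as [z [Hz Heq]]; try lra.
  rewrite Rpower_1_base in Heq. rewrite Rmin_left, Rmax_right in Hz by lra.
  assert (1 <= Rpower z (p - 1)) by (apply rp_ge1; lra).
  assert (p * 1 * (u - 1) <= p * Rpower z (p-1) * (u-1)) by (apply Rmult_le_compat_r; [lra| apply Rmult_le_compat_l; lra]).
  lra.
Qed.

Lemma sin_bounds x : 0 <= x <= PI -> 0 <= sin x <= 1.
Proof. intros. split. apply sin_ge_0; lra. apply SIN_bound. Qed.

Lemma region1 N p lam U U1 U2 a : (3 <= N)%nat -> 1 < p -> 0 < lam -> SOL N p lam U U1 U2 ->
  (forall x y, 0 <= x -> x <= y -> y <= 1 -> U y <= U x) ->
  0 < a -> (INR N - 1) / a < sqrt (lam * (p - 1)) -> a + PI / sqrt (lam * (p - 1)) <= 1 ->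
  U (a + PI / sqrt (lam * (p - 1))) <= 1.
Proof.
  intros HN Hp Hl HS Hdec Ha Hom Hb.
  assert (N3 := INR_N3 N HN).
  pose proof HS as (HC & _ & H1 & H0 & Hpos).
  set (w := sqrt (lam * (p - 1))) in *.
  assert (Hw : 0 < w) by (apply sqrt_lt_R0; nra).
  assert (Hw2 : w * w = lam * (p - 1)) by (apply sqrt_sqrt; nra).
  assert (HPI := PI_RGT_0).
  set (b := a + PI / w) in *.
  assert (Hab : a < b) by (unfold b; assert (0 < PI / w) by (apply Rdiv_lt_0_compat; lra); lra).
  destruct (Rlt_or_le (U b) 1) as [|Hub]; [lra|].
  set (W := fun r => U1 r * sin (w * (r - a)) - (U r - 1) * (w * cos (w * (r - a))) + (INR N - 1) / a * (U r - 1)).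
  set (Wd := fun r => U2 r * sin (w * (r - a)) + w * w * (U r - 1) * sin (w * (r - a)) + (INR N - 1) / a * U1 r).
  assert (HW : W b <= W a).
  { apply (mono_dec W Wd); try lra.
    - intros c Hc. destruct (HC c ltac:(lra)) as [HU [HU1 _]].
      unfold W, Wd. eapply dpl_eq. dsolve. cbv beta. field. lra.
    - intros c Hc. unfold Wd.
      rewrite (SOL_ode _ _ _ _ _ _ HS c) by lra.
      assert (Hphi : 0 <= sin (w * (c - a)) <= 1).
      { apply sin_bounds. split. apply Rmult_le_pos; lra.
        apply (Rmult_le_reg_l (/ w)). apply Rinv_0_lt_compat; lra.
        replace (/ w * (w * (c - a))) with (c - a) by (field; lra).
        unfold b in Hc. replace (/ w * PI) with (PI / w) by (unfold Rdiv; ring). lra. }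
      assert (HU1c : U1 c <= 0) by (apply (noninc_deriv U c); auto; try lra; apply (HC c); lra).
      assert (HUc : 1 <= U c) by (assert (U b <= U c) by (apply Hdec; lra); lra).
      assert (HB := bernoulli (U c) p HUc Hp).
      set (phi := sin (w * (c - a))) in *.
      assert (E : - ((INR N - 1) / c * U1 c) - lam * (- U c + Rpower (U c) p) =
                  - ((INR N - 1) / c * U1 c) - lam * (Rpower (U c) p - U c)) by ring.
      rewrite E, Hw2.
      assert (T1 : (INR N - 1) / c * phi <= (INR N - 1) / a).
      { unfold Rdiv. assert (/ c <= / a) by (apply Rinv_le_contravar; lra).
        assert (0 < / c) by (apply Rinv_0_lt_compat; lra).
        assert (/ c * phi <= / c) by nra.
        assert (0 <= INR N - 1) by lra. nra. }
      assert (T2 : 0 <= lam * phi * ((Rpower (U c) p - U c) - (p - 1) * (U c - 1))).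
      { apply Rmult_le_pos; [apply Rmult_le_pos|]; lra. }
      assert (T3 : U1 c * ((INR N - 1) / a - (INR N - 1) / c * phi) <= 0).
      { apply Rmult_le_0_r_neg; lra. }
      replace ((- ((INR N - 1) / c * U1 c) - lam * (Rpower (U c) p - U c)) * phi +
        lam * (p - 1) * (U c - 1) * phi + (INR N - 1) / a * U1 c)
       with (U1 c * ((INR N - 1) / a - (INR N - 1) / c * phi) - lam * phi * ((Rpower (U c) p - U c) - (p - 1) * (U c - 1))) by (field; repeat split; lra).
      lra. }
  unfold W in HW.
  replace (w * (b - a)) with PI in HW by (unfold b; field; lra).
  replace (w * (a - a)) with 0 in HW by ring.
  rewrite sin_PI, cos_PI, sin_0, cos_0 in HW.
  assert (0 <= (U b - 1) * (w + (INR N - 1) / a)).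
  { apply Rmult_le_pos; [lra|]. assert (0 < (INR N - 1) / a) by (apply Rdiv_lt_0_compat; lra). lra. }
  assert (Hua : (U a - 1) * (w - (INR N - 1) / a) <= 0).
  { replace ((U a - 1) * (w - (INR N - 1) / a)) with (- (U1 a * 0 - (U a - 1) * (w * 1) + (INR N - 1) / a * (U a - 1))) by ring.
    replace (U1 b * 0 - (U b - 1) * (w * -1) + (INR N - 1) / a * (U b - 1)) with ((U b - 1) * (w + (INR N - 1) / a)) in HW by ring.
    lra. }
  assert (U a <= 1).
  { destruct (Rle_or_lt (U a) 1); auto. assert (0 < (U a - 1) * (w - (INR N - 1) / a)) by (apply Rmult_lt_0_compat; lra). lra. }
  assert (U b <= U a) by (apply Hdec; lra). lra.
Qed.

Lemma region2 N p lam U U1 U2 kap : (3 <= N)%nat -> 1 < p -> 0 < lam -> 0 < kap -> SOL N p lam U U1 U2 ->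
  (forall x y, 0 <= x -> x <= y -> y <= 1 -> U y <= U x) ->
  0 <= 1 - PI / sqrt (lam * kap) ->
  U (1 - PI / sqrt (lam * kap)) <= 1 -> U 1 < 1 ->
  (forall r, 1 - PI / sqrt (lam * kap) <= r <= 1 -> kap * (1 - U r) <= U r - Rpower (U r) p) -> False.
Proof.
  intros HN Hp Hl Hk HS Hdec Hc0 Hu0 Hu1 Hh.
  assert (N3 := INR_N3 N HN).
  pose proof HS as (HC & _ & H1 & H0 & Hpos).
  set (w := sqrt (lam * kap)) in *.
  assert (Hw : 0 < w) by (apply sqrt_lt_R0; nra).
  assert (Hw2 : w * w = lam * kap) by (apply sqrt_sqrt; nra).
  assert (HPI := PI_RGT_0).
  set (c0 := 1 - PI / w) in *.
  assert (Hc01 : c0 < 1) by (unfold c0; assert (0 < PI / w) by (apply Rdiv_lt_0_compat; lra); lra).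
  set (V := fun r => - U1 r * sin (w * (r - c0)) - (1 - U r) * (w * cos (w * (r - c0)))).
  set (Vd := fun r => - U2 r * sin (w * (r - c0)) + w * w * (1 - U r) * sin (w * (r - c0))).
  assert (HV : V 1 <= V c0).
  { apply (mono_dec V Vd); try lra.
    - intros c Hc. destruct (HC c ltac:(lra)) as [HU [HU1 _]].
      unfold V, Vd. eapply dpl_eq. dsolve. cbv beta. field.
    - intros c Hc. unfold Vd.
      rewrite (SOL_ode _ _ _ _ _ _ HS c) by lra.
      assert (Hphi : 0 <= sin (w * (c - c0)) <= 1).
      { apply sin_bounds. split. apply Rmult_le_pos; lra.
        apply (Rmult_le_reg_l (/ w)). apply Rinv_0_lt_compat; lra.
        replace (/ w * (w * (c - c0))) with (c - c0) by (field; lra).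
        unfold c0 in *. replace (/ w * PI) with (PI / w) by (unfold Rdiv; ring). lra. }
      assert (HU1c : U1 c <= 0) by (apply (noninc_deriv U c); auto; try lra; apply (HC c); lra).
      assert (Hhc := Hh c ltac:(lra)).
      set (phi := sin (w * (c - c0))) in *.
      rewrite Hw2.
      assert (T1 : U1 c * ((INR N - 1) / c * phi) <= 0).
      { apply Rmult_le_0_r_neg; auto. apply Rmult_le_pos; [|lra]. apply Rdiv_le_0_compat; lra. }
      assert (T2 : 0 <= lam * phi * ((U c - Rpower (U c) p) - kap * (1 - U c))).
      { apply Rmult_le_pos; [apply Rmult_le_pos|]; lra. }
      replace (- (- ((INR N - 1) / c * U1 c) - lam * (- U c + Rpower (U c) p)) * phi + lam * kap * (1 - U c) * phi)
       with (U1 c * ((INR N - 1) / c * phi) - lam * phi * ((U c - Rpower (U c) p) - kap * (1 - U c))) by (field; lra).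
      lra. }
  unfold V in HV.
  replace (w * (1 - c0)) with PI in HV by (unfold c0; field; lra).
  replace (w * (c0 - c0)) with 0 in HV by ring.
  rewrite sin_PI, cos_PI, sin_0, cos_0, H1 in HV.
  assert (0 < (1 - U 1) * w) by (apply Rmult_lt_0_compat; lra).
  assert (0 <= (1 - U c0) * w) by (apply Rmult_le_pos; lra).
  lra.
Qed.

Lemma hbound m u p : 1 < p -> 0 < m <= u -> u <= 1 ->
  m * Rmin 1 (p - 1) * (1 - u) <= u - Rpower u p.
Proof.
  intros Hp Hm Hu.
  assert (Hth1 : Rmin 1 (p - 1) <= 1) by apply Rmin_l.
  assert (Hth2 : Rmin 1 (p - 1) <= p - 1) by apply Rmin_r.
  assert (Hth0 : 0 < Rmin 1 (p - 1)) by (apply Rmin_glb_lt; lra).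
  set (th := Rmin 1 (p - 1)) in *.
  assert (Hkey : th * (1 - u) <= 1 - Rpower u (p - 1)).
  { destruct (Rle_or_lt 2 p) as [Hp2|Hp2].
    - rewrite (rp_sub1 u (p-1)) by lra.
      assert (Rpower u (p - 1 - 1) <= 1) by (apply rp_le1; lra).
      assert (0 < Rpower u (p - 1 - 1)) by apply rp_pos.
      assert (Rpower u (p - 1 - 1) * u <= u) by nra. nra.
    - destruct (rp_mvt u 1 (p - 1)) as [z [Hz Heq]]; try lra.
      rewrite Rpower_1_base in Heq. rewrite Rmin_left, Rmax_right in Hz by lra.
      assert (1 <= Rpower z (p - 1 - 1)) by (apply rp_ge1'; lra).
      assert ((p - 1) * 1 * (1 - u) <= (p - 1) * Rpower z (p - 1 - 1) * (1 - u))
        by (apply Rmult_le_compat_r; [lra|apply Rmult_le_compat_l; lra]).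
      nra. }
  rewrite (rp_sub1 u p) by lra.
  assert (m * th * (1 - u) <= u * th * (1 - u)).
  { apply Rmult_le_compat_r; [lra|]. apply Rmult_le_compat_r; lra. }
  assert (u * (th * (1 - u)) <= u * (1 - Rpower u (p - 1))) by (apply Rmult_le_compat_l; lra).
  nra.
Qed.

Lemma part2 N p : (3 <= N)%nat -> p > p_S N ->
  exists lam_bar : R, lam_bar > 0 /\
     forall lam U, lam > lam_bar ->
       regular_solution N p lam U -> ~ radially_decreasing U.
Proof.
  intros HN HpS.
  assert (Hp := pS_gt1 N p HN HpS). assert (N3 := INR_N3 N HN).
  assert (Hm0 := m0_pos N p HN HpS).
  set (kap := m0 N p * Rmin 1 (p - 1)).
  assert (Hk : 0 < kap) by (unfold kap; apply Rmult_lt_0_compat; [lra|apply Rmin_glb_lt; lra]).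
  assert (HPI := PI_RGT_0).
  exists (4 * (INR N + PI) ^ 2 / (p - 1) + 4 * PI ^ 2 / kap + 1).
  assert (Q1 : 0 <= 4 * (INR N + PI) ^ 2 / (p - 1)) by (apply Rdiv_le_0_compat; [nra|lra]).
  assert (Q2 : 0 <= 4 * PI ^ 2 / kap) by (apply Rdiv_le_0_compat; [nra|lra]).
  split; [lra|].
  intros lam U Hlam Hreg [Hdec Hnc].
  destruct (reg_to_SOL N p lam U Hreg) as (U1 & U2 & HS).
  assert (Hl : 0 < lam) by lra.
  pose proof HS as (HC & _ & HU11 & HU10 & Hpos).
  set (w1 := sqrt (lam * (p - 1))).
  assert (Hw1 : 0 < w1) by (apply sqrt_lt_R0; nra).
  assert (Hw12 : w1 * w1 = lam * (p - 1)) by (apply sqrt_sqrt; nra).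
  set (w2 := sqrt (lam * kap)).
  assert (Hw2 : 0 < w2) by (apply sqrt_lt_R0; nra).
  assert (Hw22 : w2 * w2 = lam * kap) by (apply sqrt_sqrt; nra).
  assert (Hlw1 : 4 * (INR N + PI) ^ 2 < lam * (p - 1)).
  { assert (Z : 4 * (INR N + PI) ^ 2 / (p - 1) < lam) by lra.
    apply (Rmult_lt_compat_r (p - 1)) in Z; [|lra].
    replace (4 * (INR N + PI) ^ 2 / (p - 1) * (p - 1)) with (4 * (INR N + PI) ^ 2) in Z by (field; lra). lra. }
  assert (Hlw2 : 4 * PI ^ 2 < lam * kap).
  { assert (Z : 4 * PI ^ 2 / kap < lam) by lra.
    apply (Rmult_lt_compat_r kap) in Z; [|lra].
    replace (4 * PI ^ 2 / kap * kap) with (4 * PI ^ 2) in Z by (field; lra). lra. }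
  assert (Hw1b : 2 * (INR N + PI) < w1).
  { destruct (Rlt_or_le (2 * (INR N + PI)) w1); auto. nra. }
  assert (Hw2b : 2 * PI < w2).
  { destruct (Rlt_or_le (2 * PI) w2); auto. nra. }
  set (a := INR N / w1).
  assert (Ha : 0 < a) by (unfold a; apply Rdiv_lt_0_compat; lra).
  assert (Hb : a + PI / w1 < 1 / 2).
  { unfold a. replace (INR N / w1 + PI / w1) with ((INR N + PI) / w1) by (field; lra).
    apply (Rmult_lt_reg_r w1); auto. replace ((INR N + PI) / w1 * w1) with (INR N + PI) by (field; lra). lra. }
  assert (Hc0 : 1 / 2 < 1 - PI / w2).
  { assert (PI / w2 < 1 / 2).
    { apply (Rmult_lt_reg_r w2); auto. replace (PI / w2 * w2) with PI by (field; lra). lra. }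
    lra. }
  assert (HPw1 : 0 < PI / w1) by (apply Rdiv_lt_0_compat; lra).
  assert (HPw2 : 0 < PI / w2) by (apply Rdiv_lt_0_compat; lra).
  assert (HR1 : U (a + PI / w1) <= 1).
  { apply (region1 N p lam U U1 U2 a HN Hp Hl HS Hdec Ha); try lra.
    fold w1. unfold a. replace ((INR N - 1) / (INR N / w1)) with ((INR N - 1) * w1 / INR N) by (field; lra).
    apply (Rmult_lt_reg_r (INR N)); [lra|]. replace ((INR N - 1) * w1 / INR N * INR N) with ((INR N - 1) * w1) by (field; lra).
    nra. fold w1. lra. }
  assert (Hmlow := m_lower N p lam U U1 U2 HN HpS Hl HS Hdec).
  assert (Hm1 : U 1 < 1).
  { destruct (Rlt_or_le (U 1) 1) as [|Hge]; auto. exfalso.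
    destruct Hnc as (x & y & Hx & Hy & Hne). apply Hne.
    apply (const_side N p lam U U1 U2); auto. left. intros z Hz.
    assert (U 1 <= U z) by (apply Hdec; lra). lra. }
  apply (region2 N p lam U U1 U2 kap HN Hp Hl Hk HS Hdec); fold w2; try lra.
  - assert (U (1 - PI / w2) <= U (a + PI / w1)) by (apply Hdec; lra). lra.
  - intros r Hr. unfold kap.
    assert (U 1 <= U r) by (apply Hdec; lra).
    assert (U r <= U (1 - PI / w2)) by (apply Hdec; lra).
    assert (U (1 - PI / w2) <= U (a + PI / w1)) by (apply Hdec; lra).
    apply hbound; auto; lra.
Qed.

Theorem corollary1 (N : nat) (p : R) (HN : (3 <= N)%nat) (Hp : p > p_S N) :
  (exists lam_low : R, lam_low > 0 /\
     forall lam U, 0 < lam < lam_low ->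
       regular_solution N p lam U -> ~ nonconstant_01 U) /\
  (exists lam_bar : R, lam_bar > 0 /\
     forall lam U, lam > lam_bar ->
       regular_solution N p lam U -> ~ radially_decreasing U).
Proof.
  split. apply part1; auto. apply part2; auto.
Qed.
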